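(* Let $L_1,L_2$ be disjoint first-order languages without function symbols, each containing at least one constant symbol, let $T_1,T_2$ be an $L_1$-theory and an $L_2$-theory, and let $T_{\mathrm{sim}}$ be the theory of simple products of $T_1$ and $T_2$. Then $T_{\mathrm{sim}}$ is NIP if and only if both $T_1$ and $T_2$ are NIP.
   Context: Language of simple product $L_{\mathrm{sim}}$: constant symbols $C_{(c_1,c_2)}$ for each pair of constants $c_1\in L_1$, $c_2\in L_2$ (and no others); predicate symbols: those of $L_1$, those of $L_2$, and two binary predicates $\sim_1,\sim_2$. $T_\times$ states: $\sim_1,\sim_2$ are equivalence relations; $\forall x\forall y((x\sim_1y)\wedge(x\sim_2y)\to x=y)$; $\forall x\forall y\exists z((x\sim_1z)\wedge(y\sim_2z))$. $\bar x\sim_k\bar y$ means $\bigwedge_i x_i\sim_k y_i$. Standard conversion $\widetilde\phi$ of an $L_k$-formula $\phi$: first rewrite atomic formulas $R(\bar t)$ containing constants as $\exists\bar y(R(\bar y)\wedge\bigwedge_i t_i=y_i)$; equality of variables $x=y$ becomes $x\sim_k y$; equality involving a constant $c$ of $L_k$ is rewritten using $\sim_k$ and $C_{(c,d)}$ (if $k=1$) or $C_{(d,c)}$ (if $k=2$), $d$ a fixed constant of the other language; $R(\bar x)$ with $R\in L_k$ stays the same; the conversion commutes with Boolean connectives and $\exists$. $T_{\mathrm{sim}}$ consists of $T_\times$, all $\widetilde\sigma$ for $\sigma\in T_1\cup T_2$, and for each $k$ and each predicate $R\in L_k$ the sentence $\forall\bar x\forall\bar y((\bar x\sim_k\bar y)\to(R(\bar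 x)\leftrightarrow R(\bar y)))$. A formula $\phi(\bar x;\bar y)$ has IP in a theory $T$ if in some model of $T$ there are $(\bar a_i)_{i<\omega}$ and $(\bar b_I)_{I\subseteq\omega}$ with $\models\phi(\bar a_i;\bar b_I)\iff i\in I$; $T$ is NIP if no formula has IP. *)

(* Defs.v *)
From mathcomp Require Import all_boot.
Unset Printing Implicit Defensive.

Record lang := Lang {
  const : Type;
  psym : Type;
  arity : psym -> nat }.
Arguments arity {l} _.

Inductive term (C : Type) :=
| TVar : nat -> term C
| TConst : C -> term C.
Arguments TVar {C}.
Arguments TConst {C}.

Inductive formula (L : lang) :=
| FEq : term (const L) -> term (const L) -> formula L
| FAtom (R : psym L) : ('I_(arity R) -> term (const L)) -> formula L
| FNeg : formula L -> formula L
| FAnd : formula L -> formula L -> formula L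
| FEx : nat -> formula L -> formula L.
Arguments FEq {L}.
Arguments FAtom {L}.
Arguments FNeg {L}.
Arguments FAnd {L}.
Arguments FEx {L}.

Definition FOr {L} (p q : formula L) := FNeg (FAnd (FNeg p) (FNeg q)).
Definition FImp {L} (p q : formula L) := FOr (FNeg p) q.
Definition FIff {L} (p q : formula L) := FAnd (FImp p q) (FImp q p).
Definition FAll {L} (x : nat) (p : formula L) := FNeg (FEx x (FNeg p)).

Definition term_var {C} (t : term C) (x : nat) : Prop :=
  match t with TVar y => y = x | TConst _ => False end.

Fixpoint free_in {L} (x : nat) (p : formula L) : Prop :=
  match p with
  | FEq t u => term_var t x \/ term_var u x
  | FAtom R ts => exists i, term_var (ts i) x
  | FNeg q => free_in x q
  | FAnd q r => free_in x q \/ free_in x r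
  | FEx y q => y <> x /\ free_in x q
  end.

Definition sentence {L} (p : formula L) : Prop := forall x, ~ free_in x p.

Record structure (L : lang) := Structure {
  carrier :> Type;
  iconst : const L -> carrier;
  ipred : forall R : psym L, ('I_(arity R) -> carrier) -> Prop }.
Arguments iconst {L} _ _.
Arguments ipred {L} _ _ _.

Definition eval {L} (M : structure L) (v : nat -> M) (t : term (const L)) : M :=
  match t with TVar x => v x | TConst c => iconst M c end.

Definition upd {A} (v : nat -> A) (x : nat) (a : A) : nat -> A :=
  fun y => if y == x then a else v y.

Fixpoint sat {L} (M : structure L) (v : nat -> M) (p : formula L) : Prop :=
  match p with
  | FEq t u => eval M v t = eval M v u
  | FAtom R ts => ipred M R (fun i => eval M v (ts i))
  | FNeg q => ~ sat M v q
  | FAnd q r => sat M v q /\ sat M v r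
  | FEx x q => exists a : M, sat M (upd v x a) q
  end.

Definition theory (L : lang) := formula L -> Prop.

Definition model_of {L} (M : structure L) (T : theory L) : Prop :=
  forall p, T p -> forall v : nat -> M, sat M v p.

Definition consistent {L} (T : theory L) : Prop :=
  exists M : structure L, model_of M T.

(* phi(x;y) : xs is the (finite) set of object variables x, all remaining
   (free) variables are parameter variables y.  The assignment for the pair
   (a_i, b_I) takes the x-variables from a_i and the others from b_I. *)
Definition mix {A} (xs : seq nat) (a b : nat -> A) : nat -> A :=
  fun k => if k \in xs then a k else b k.

Definition has_IP {L} (T : theory L) (p : formula L) (xs : seq nat) : Prop :=
  exists M : structure L, model_of M T /\
  exists (a : nat -> (nat -> M)) (b : (nat -> Prop) -> (nat -> M)),
    forall (i : nat) (I : nat -> Prop), sat M (mix xs (a i) (b I)) p <-> I i.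

Definition NIP {L} (T : theory L) : Prop :=
  forall (p : formula L) (xs : seq nat), ~ has_IP T p xs.

Section SimpleProduct.
Variables L1 L2 : lang.

Inductive sim_pred :=
| SP1 : psym L1 -> sim_pred
| SP2 : psym L2 -> sim_pred
| Sim1 : sim_pred
| Sim2 : sim_pred.

Definition sim_arity (p : sim_pred) : nat :=
  match p with SP1 R => arity R | SP2 R => arity R | Sim1 => 2 | Sim2 => 2 end.

Definition Lsim : lang := @Lang (const L1 * const L2)%type sim_pred sim_arity.

Definition pair_fun (t u : term (const Lsim)) : 'I_2 -> term (const Lsim) :=
  fun i => if val i == 0 then t else u.

Definition fsim1 (t u : term (const Lsim)) : formula Lsim :=
  FAtom (Sim1 : psym Lsim) (pair_fun t u).
Definition fsim2 (t u : term (const Lsim)) : formula Lsim :=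
  FAtom (Sim2 : psym Lsim) (pair_fun t u).

Definition is_const {C} (t : term C) : bool :=
  if t is TConst _ then true else false.
Definition var_index {C} (t : term C) : nat :=
  if t is TVar x then x else 0.

Definition exs (ys : seq nat) (p : formula Lsim) : formula Lsim :=
  foldr FEx p ys.

Definition tr1 (d : const L2) (t : term (const L1)) : term (const Lsim) :=
  match t with TVar x => TVar x | TConst c => TConst (c, d) end.

Fixpoint conv1 (d : const L2) (p : formula L1) : formula Lsim :=
  match p with
  | FEq t u => fsim1 (tr1 d t) (tr1 d u)
  | FAtom R ts =>
      let n := arity R in
      if [exists i, is_const (ts i)] then
        (* R(t) ~> exists y (R(y) /\ /\_i tr(t_i) ~1 y_i), y fresh *)
        let N := (\max_(i < n) var_index (ts i)).+1 in
        exs [seq N + j | j <- iota 0 n]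
          (foldr FAnd
             (FAtom (SP1 R : psym Lsim) (fun i : 'I_n => TVar (N + i)))
             [seq fsim1 (tr1 d (ts i)) (TVar (N + i)) | i <- enum 'I_n])
      else FAtom (SP1 R : psym Lsim) (fun i : 'I_n => tr1 d (ts i))
  | FNeg q => FNeg (conv1 d q)
  | FAnd q r => FAnd (conv1 d q) (conv1 d r)
  | FEx x q => FEx x (conv1 d q)
  end.

Definition tr2 (d : const L1) (t : term (const L2)) : term (const Lsim) :=
  match t with TVar x => TVar x | TConst c => TConst (d, c) end.

Fixpoint conv2 (d : const L1) (p : formula L2) : formula Lsim :=
  match p with
  | FEq t u => fsim2 (tr2 d t) (tr2 d u)
  | FAtom R ts =>
      let n := arity R in
      if [exists i, is_const (ts i)] then
        let N := (\max_(i < n) var_index (ts i)).+1 in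
        exs [seq N + j | j <- iota 0 n]
          (foldr FAnd
             (FAtom (SP2 R : psym Lsim) (fun i : 'I_n => TVar (N + i)))
             [seq fsim2 (tr2 d (ts i)) (TVar (N + i)) | i <- enum 'I_n])
      else FAtom (SP2 R : psym Lsim) (fun i : 'I_n => tr2 d (ts i))
  | FNeg q => FNeg (conv2 d q)
  | FAnd q r => FAnd (conv2 d q) (conv2 d r)
  | FEx x q => FEx x (conv2 d q)
  end.

Definition alls (xs : seq nat) (p : formula Lsim) : formula Lsim :=
  foldr FAll p xs.

Definition v (x : nat) : term (const Lsim) := TVar x.

Fixpoint inP {A} (a : A) (s : seq A) : Prop :=
  match s with [::] => False | b :: s' => a = b \/ inP a s' end.

Definition equiv_axioms (s : term (const Lsim) -> term (const Lsim) -> formula Lsim)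
  : seq (formula Lsim) :=
  [:: FAll 0 (s (v 0) (v 0));
      alls [:: 0; 1] (FImp (s (v 0) (v 1)) (s (v 1) (v 0)));
      alls [:: 0; 1; 2] (FImp (FAnd (s (v 0) (v 1)) (s (v 1) (v 2))) (s (v 0) (v 2)))].

Definition Tx_axioms : seq (formula Lsim) :=
  equiv_axioms fsim1 ++ equiv_axioms fsim2 ++
  [:: alls [:: 0; 1] (FImp (FAnd (fsim1 (v 0) (v 1)) (fsim2 (v 0) (v 1)))
                          (FEq (v 0) (v 1)));
      alls [:: 0; 1] (FEx 2 (FAnd (fsim1 (v 0) (v 2)) (fsim2 (v 1) (v 2))))].

(* forall x forall y (x ~k y -> (R(x) <-> R(y))), x_i = i, y_i = n + i *)
Definition invariance (s : term (const Lsim) -> term (const Lsim) -> formula Lsim)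
  (R : psym Lsim) : formula Lsim :=
  let n := arity R in
  alls (iota 0 (n + n))
    (FImp (foldr FAnd (FEq (v 0) (v 0)) [seq s (v i) (v (n + i)) | i <- iota 0 n])
          (FIff (FAtom R (fun i : 'I_n => v i)) (FAtom R (fun i : 'I_n => v (n + i))))).

Definition Tsim (d1 : const L1) (d2 : const L2) (T1 : theory L1) (T2 : theory L2)
  : theory Lsim :=
  fun p =>
    inP p Tx_axioms
    \/ (exists s, T1 s /\ p = conv1 d2 s)
    \/ (exists s, T2 s /\ p = conv2 d1 s)
    \/ (exists R : psym L1, p = invariance fsim1 (SP1 R : psym Lsim))
    \/ (exists R : psym L2, p = invariance fsim2 (SP2 R : psym Lsim)).

End SimpleProduct.
Arguments Tsim {L1 L2} _ _ _ _.

(* Main.v *)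
Require Import Defs.
From mathcomp Require Import all_boot.
From mathcomp Require Import zify.
From mathcomp Require boolp classical_sets filter.
From Stdlib Require Import Classical ClassicalEpsilon FunctionalExtensionality PropExtensionality.
Unset Printing Implicit Defensive.

Section Sem.
Variable L : lang.
Variable M : structure L.

Lemma sat_FEx (v : nat -> M) x p :
  sat M v (FEx x p) <-> exists a, sat M (upd v x a) p.
Proof. done. Qed.

Lemma sat_FAnd (v : nat -> M) p q :
  sat M v (FAnd p q) <-> sat M v p /\ sat M v q.
Proof. done. Qed.

Lemma sat_FAll (v : nat -> M) x p :
  sat M v (FAll x p) <-> forall a, sat M (upd v x a) p.
Proof.
simpl; split.
- move=> H a; apply: NNPP => Hn; apply: H; by exists a.
- move=> H [a Ha]; exact: Ha (H a).
Qed.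

Lemma sat_FImp (v : nat -> M) p q :
  sat M v (FImp p q) <-> (sat M v p -> sat M v q).
Proof.
simpl; split.
- move=> H Hp; apply: NNPP => Hq; apply: H; split => //; tauto.
- move=> H [H1 H2]; apply: H2; apply: H; tauto.
Qed.

Lemma sat_FIff (v : nat -> M) p q :
  sat M v (FIff p q) <-> (sat M v p <-> sat M v q).
Proof.
rewrite /FIff; change (sat M v (FAnd (FImp p q) (FImp q p))) with
  (sat M v (FImp p q) /\ sat M v (FImp q p)).
rewrite !sat_FImp; tauto.
Qed.

Lemma sat_foldrAnd n (v : nat -> M) b (F : 'I_n -> formula L) (s : seq 'I_n) :
  sat M v (foldr FAnd b [seq F i | i <- s]) <->
  sat M v b /\ (forall i, i \in s -> sat M v (F i)).
Proof.
elim: s => [|i s IH] /=; first by split; [move=> H; split|case].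
rewrite IH; split.
- move=> [H1 [H2 H3]]; split => // j; rewrite inE => /orP [/eqP ->|] //; exact: H3.
- move=> [H1 H2]; split; first by apply: H2; rewrite inE eqxx.
  split => // j Hj; apply: H2; by rewrite inE Hj orbT.
Qed.

Lemma sat_foldrAnd_nat (v : nat -> M) b (F : nat -> formula L) (s : seq nat) :
  sat M v (foldr FAnd b [seq F i | i <- s]) <->
  sat M v b /\ (forall i, i \in s -> sat M v (F i)).
Proof.
elim: s => [|i s IH] /=; first by split; [move=> H; split|case].
rewrite IH; split.
- move=> [H1 [H2 H3]]; split => // j; rewrite inE => /orP [/eqP ->|] //; exact: H3.
- move=> [H1 H2]; split; first by apply: H2; rewrite inE eqxx.
  split => // j Hj; apply: H2; by rewrite inE Hj orbT.
Qed.

End Sem.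

Section ExsAlls.
Variables L1 L2 : lang.
Variable M : structure (Lsim L1 L2).

Lemma sat_exs (v : nat -> M) ys p :
  sat M v (exs L1 L2 ys p) <-> exists w : nat -> M, (forall k, k \notin ys -> w k = v k) /\ sat M w p.
Proof.
elim: ys v => [|y ys IH] v /=.
- split; first by move=> H; exists v.
  move=> [w [Hw Hp]]; have -> : v = w by apply: functional_extensionality => k; rewrite Hw.
  done.
- split.
  + move=> [a /IH [w [Hw Hp]]]; exists w; split => // k; rewrite inE negb_or => /andP [Hk1 Hk2].
    rewrite Hw // /upd; by rewrite (negbTE Hk1).
  + move=> [w [Hw Hp]]; exists (w y); apply/IH; exists w; split => // k Hk.
    rewrite /upd; case: eqP => [->//|/eqP Hne]; apply: Hw; by rewrite inE negb_or Hne.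
Qed.

Lemma sat_alls (v : nat -> M) ys p :
  sat M v (alls L1 L2 ys p) <-> forall w : nat -> M, (forall k, k \notin ys -> w k = v k) -> sat M w p.
Proof.
elim: ys v => [|y ys IH] v.
- simpl; split; last by move=> H; apply: H.
  move=> Hp w Hw; have -> : w = v by apply: functional_extensionality => k; rewrite Hw.
  done.
- change (alls L1 L2 (y :: ys) p) with (FAll y (alls L1 L2 ys p)).
  rewrite (@sat_FAll _ M v y (alls L1 L2 ys p)); split.
  + move=> H w Hw; apply: (proj1 (IH _) (H (w y))) => k Hk.
    rewrite /upd; case: eqP => [->//|/eqP Hne]; apply: Hw; by rewrite inE negb_or Hne.
  + move=> H a; apply/IH => w Hw; apply: H => k; rewrite inE negb_or => /andP [Hk1 Hk2].
    rewrite Hw // /upd; by rewrite (negbTE Hk1).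
Qed.

End ExsAlls.

Section Conv1.
Variables (L1 L2 : lang) (d2 : const L2).
Variable M : structure (Lsim L1 L2).
Variable N : structure L1.
Variable pi : M -> N.
Hypothesis pi_surj : forall y, exists x, pi x = y.
Definition rel1 (x y : M) := ipred M (Sim1 L1 L2) (fun i : 'I_2 => if val i == 0 then x else y).
Hypothesis Hsim : forall x y, rel1 x y <-> pi x = pi y.
Hypothesis HR : forall R (f : 'I_(arity R) -> M),
  ipred M (SP1 L1 L2 R) f <-> ipred N R (fun i => pi (f i)).
Hypothesis Hc : forall c, iconst N c = pi (iconst M (c, d2)).

Lemma sat_fsim1 v t u : sat M v (fsim1 L1 L2 t u) <-> rel1 (eval M v t) (eval M v u).
Proof.
rewrite /= /rel1.
have -> : (fun i => eval M v (pair_fun L1 L2 t u i)) =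
          (fun i : 'I_2 => if val i == 0 then eval M v t else eval M v u).
  by apply: functional_extensionality => i; rewrite /pair_fun; case: ifP.
done.
Qed.

Lemma eval_tr1 v t : pi (eval M v (tr1 L1 L2 d2 t)) = eval N (fun k => pi (v k)) t.
Proof. by case: t => [x|c] //=; rewrite Hc. Qed.

Lemma conv1_sat p v : sat M v (conv1 L1 L2 d2 p) <-> sat N (fun k => pi (v k)) p.
Proof.
elim: p v => [t u|R ts|q IH|q IHq r IHr|x q IH] v.
- change (sat M v (fsim1 L1 L2 (tr1 L1 L2 d2 t) (tr1 L1 L2 d2 u)) <-> sat N (fun k => pi (v k)) (FEq t u)).
  rewrite sat_fsim1 Hsim !eval_tr1 //.
- rewrite /=; case: ifP => _; last first.
    change (ipred M (SP1 L1 L2 R) (fun i => eval M v (tr1 L1 L2 d2 (ts i))) <-> ipred N R (fun i => eval N (fun k : nat => pi (v k)) (ts i))).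
    rewrite HR; have -> : (fun i => pi (eval M v (tr1 L1 L2 d2 (ts i)))) =
       (fun i => eval N (fun k => pi (v k)) (ts i)) by
       apply: functional_extensionality => i; rewrite eval_tr1.
    done.
  set n := arity R.
  set N0 := (\max_(i < n) var_index (ts i)).+1.
  have agree : forall w : nat -> M, (forall k, k \notin [seq N0 + j | j <- iota 0 n] -> w k = v k) ->
     forall i, eval M w (tr1 L1 L2 d2 (ts i)) = eval M v (tr1 L1 L2 d2 (ts i)).
    move=> w Hw i; case Et: (ts i) => [y|c] //=; apply: Hw.
    apply/negP => /mapP [j _ Hj].
    have : var_index (ts i) < N0 by rewrite ltnS; exact: leq_bigmax.
    by rewrite Et /= Hj ltnNge leq_addr.
  rewrite sat_exs; split.
  + move=> [w [Hw Hb]]; move/sat_foldrAnd: Hb => [HRw Hall].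
    move: HRw => /= /HR HRw.
    have -> : (fun i => eval N (fun k => pi (v k)) (ts i)) = (fun i => pi (w (N0 + i))).
      apply: functional_extensionality => i; rewrite -eval_tr1 -(agree w Hw).
      apply/Hsim; have := Hall i (mem_enum _ i); rewrite sat_fsim1 //.
    exact: HRw.
  + move=> H.
    pose w0 := fun k => if N0 <= k then
       (if @insub _ (fun m => m < n) _ (k - N0) is Some i then eval M v (tr1 L1 L2 d2 (ts i)) else v k)
       else v k.
    have w0N : forall i : 'I_n, w0 (N0 + i) = eval M v (tr1 L1 L2 d2 (ts i)).
      move=> i; rewrite /w0 leq_addr addKn.
      have -> : @insub _ (fun m => m < n) _ (nat_of_ord i) = Some i by rewrite valK.
      done.
    have Hw0 : forall k, k \notin [seq N0 + j | j <- iota 0 n] -> w0 k = v k.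
      move=> k Hk; rewrite /w0; case: ifP => // HN.
      case: insubP => // i Hi Hv; exfalso; move/negP: Hk; apply.
      apply/mapP; exists (k - N0); first by rewrite mem_iota add0n.
      by rewrite subnKC.
    exists w0; split => //; apply/sat_foldrAnd; split.
    * rewrite /=; apply/HR.
      have -> : (fun i : 'I_n => pi (w0 (N0 + i))) = (fun i : 'I_n => eval N (fun k => pi (v k)) (ts i)).
        by apply: functional_extensionality => i; rewrite w0N eval_tr1.
      exact: H.
    * move=> i _; rewrite sat_fsim1 (agree w0 Hw0) /= w0N; exact/Hsim.
- rewrite /= IH //.
- rewrite /= IHq IHr //.
- rewrite /=; split.
  + move=> [a /IH Ha]; exists (pi a).
    have <- : (fun k => pi (upd v x a k)) = upd (fun k => pi (v k)) x (pi a) by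
      apply: functional_extensionality => k; rewrite /upd; case: eqP.
    done.
  + move=> [b Hb]; have [a Ha] := pi_surj b; exists a; apply/IH.
    have -> : (fun k => pi (upd v x a k)) = upd (fun k => pi (v k)) x b by
      apply: functional_extensionality => k; rewrite /upd; case: eqP.
    done.
Qed.

End Conv1.

Section Conv2.
Variables (L1 L2 : lang) (d1 : const L1).
Variable M : structure (Lsim L1 L2).
Variable N : structure L2.
Variable pi : M -> N.
Hypothesis pi_surj : forall y, exists x, pi x = y.
Definition rel2 (x y : M) := ipred M (Sim2 L1 L2) (fun i : 'I_2 => if val i == 0 then x else y).
Hypothesis Hsim : forall x y, rel2 x y <-> pi x = pi y.
Hypothesis HR : forall R (f : 'I_(arity R) -> M),
  ipred M (SP2 L1 L2 R) f <-> ipred N R (fun i => pi (f i)).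
Hypothesis Hc : forall c, iconst N c = pi (iconst M (d1, c)).

Lemma sat_fsim2 v t u : sat M v (fsim2 L1 L2 t u) <-> rel2 (eval M v t) (eval M v u).
Proof.
rewrite /= /rel2.
have -> : (fun i => eval M v (pair_fun L1 L2 t u i)) =
          (fun i : 'I_2 => if val i == 0 then eval M v t else eval M v u).
  by apply: functional_extensionality => i; rewrite /pair_fun; case: ifP.
done.
Qed.

Lemma eval_tr2 v t : pi (eval M v (tr2 L1 L2 d1 t)) = eval N (fun k => pi (v k)) t.
Proof. by case: t => [x|c] //=; rewrite Hc. Qed.

Lemma conv2_sat p v : sat M v (conv2 L1 L2 d1 p) <-> sat N (fun k => pi (v k)) p.
Proof.
elim: p v => [t u|R ts|q IH|q IHq r IHr|x q IH] v.
- change (sat M v (fsim2 L1 L2 (tr2 L1 L2 d1 t) (tr2 L1 L2 d1 u)) <-> sat N (fun k => pi (v k)) (FEq t u)).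
  rewrite sat_fsim2 Hsim !eval_tr2 //.
- rewrite /=; case: ifP => _; last first.
    change (ipred M (SP2 L1 L2 R) (fun i => eval M v (tr2 L1 L2 d1 (ts i))) <-> ipred N R (fun i => eval N (fun k : nat => pi (v k)) (ts i))).
    rewrite HR; have -> : (fun i => pi (eval M v (tr2 L1 L2 d1 (ts i)))) =
       (fun i => eval N (fun k => pi (v k)) (ts i)) by
       apply: functional_extensionality => i; rewrite eval_tr2.
    done.
  set n := arity R.
  set N0 := (\max_(i < n) var_index (ts i)).+1.
  have agree : forall w : nat -> M, (forall k, k \notin [seq N0 + j | j <- iota 0 n] -> w k = v k) ->
     forall i, eval M w (tr2 L1 L2 d1 (ts i)) = eval M v (tr2 L1 L2 d1 (ts i)).
    move=> w Hw i; case Et: (ts i) => [y|c] //=; apply: Hw.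
    apply/negP => /mapP [j _ Hj].
    have : var_index (ts i) < N0 by rewrite ltnS; exact: leq_bigmax.
    by rewrite Et /= Hj ltnNge leq_addr.
  rewrite sat_exs; split.
  + move=> [w [Hw Hb]]; move/sat_foldrAnd: Hb => [HRw Hall].
    move: HRw => /= /HR HRw.
    have -> : (fun i => eval N (fun k => pi (v k)) (ts i)) = (fun i => pi (w (N0 + i))).
      apply: functional_extensionality => i; rewrite -eval_tr2 -(agree w Hw).
      apply/Hsim; have := Hall i (mem_enum _ i); rewrite sat_fsim2 //.
    exact: HRw.
  + move=> H.
    pose w0 := fun k => if N0 <= k then
       (if @insub _ (fun m => m < n) _ (k - N0) is Some i then eval M v (tr2 L1 L2 d1 (ts i)) else v k)
       else v k.
    have w0N : forall i : 'I_n, w0 (N0 + i) = eval M v (tr2 L1 L2 d1 (ts i)).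
      move=> i; rewrite /w0 leq_addr addKn.
      have -> : @insub _ (fun m => m < n) _ (nat_of_ord i) = Some i by rewrite valK.
      done.
    have Hw0 : forall k, k \notin [seq N0 + j | j <- iota 0 n] -> w0 k = v k.
      move=> k Hk; rewrite /w0; case: ifP => // HN.
      case: insubP => // i Hi Hv; exfalso; move/negP: Hk; apply.
      apply/mapP; exists (k - N0); first by rewrite mem_iota add0n.
      by rewrite subnKC.
    exists w0; split => //; apply/sat_foldrAnd; split.
    * rewrite /=; apply/HR.
      have -> : (fun i : 'I_n => pi (w0 (N0 + i))) = (fun i : 'I_n => eval N (fun k => pi (v k)) (ts i)).
        by apply: functional_extensionality => i; rewrite w0N eval_tr2.
      exact: H.
    * move=> i _; rewrite sat_fsim2 (agree w0 Hw0) /= w0N; exact/Hsim.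
- rewrite /= IH //.
- rewrite /= IHq IHr //.
- rewrite /=; split.
  + move=> [a /IH Ha]; exists (pi a).
    have <- : (fun k => pi (upd v x a k)) = upd (fun k => pi (v k)) x (pi a) by
      apply: functional_extensionality => k; rewrite /upd; case: eqP.
    done.
  + move=> [b Hb]; have [a Ha] := pi_surj b; exists a; apply/IH.
    have -> : (fun k => pi (upd v x a k)) = upd (fun k => pi (v k)) x b by
      apply: functional_extensionality => k; rewrite /upd; case: eqP.
    done.
Qed.

End Conv2.

Definition equivR {A} (E : A -> A -> Prop) :=
  (forall x, E x x) /\ (forall x y, E x y -> E y x) /\ (forall x y z, E x y -> E y z -> E x z).

Section Tx.
Variables L1 L2 : lang.
Variable M : structure (Lsim L1 L2).
Notation r1 := (rel1 L1 L2 M).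
Notation r2 := (rel2 L1 L2 M).

Definition TxSem :=
  [/\ equivR r1, equivR r2, (forall x y, r1 x y -> r2 x y -> x = y) &
      (forall x y, exists z, r1 x z /\ r2 y z)].

Lemma equiv_ax_sem (s : term (const (Lsim L1 L2)) -> term (const (Lsim L1 L2)) -> formula (Lsim L1 L2))
  (r : M -> M -> Prop) :
  (forall v t u, sat M v (s t u) <-> r (eval M v t) (eval M v u)) ->
  (equivR r <-> forall p, inP p (equiv_axioms L1 L2 s) -> forall v, sat M v p).
Proof.
move=> Hs; split.
- move=> [Hr [Hsy Htr]] p /= [->|[->|[->|[]]]] v.
  + apply/sat_FAll => a; rewrite Hs; exact: Hr.
  + change (sat M v (FAll 0 (FAll 1 (FImp (s (Defs.v L1 L2 0) (Defs.v L1 L2 1)) (s (Defs.v L1 L2 1) (Defs.v L1 L2 0)))))).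
    apply/sat_FAll => a; apply/sat_FAll => b; apply/sat_FImp; rewrite !Hs /=; exact: Hsy.
  + change (sat M v (FAll 0 (FAll 1 (FAll 2 (FImp (FAnd (s (Defs.v L1 L2 0) (Defs.v L1 L2 1)) (s (Defs.v L1 L2 1) (Defs.v L1 L2 2))) (s (Defs.v L1 L2 0) (Defs.v L1 L2 2))))))).
    apply/sat_FAll => a; apply/sat_FAll => b; apply/sat_FAll => c; apply/sat_FImp.
    change (sat M ?w (FAnd ?p ?q)) with (sat M w p /\ sat M w q).
    rewrite !Hs /= => [[H1 H2]]; exact: Htr H1 H2.
- move=> H; split; [|split].
  + move=> x; have := H _ (or_introl erefl) (fun _ => x); move/sat_FAll => /(_ x); rewrite Hs //.
  + move=> x y; have := H _ (or_intror (or_introl erefl)) (fun _ => x).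
    change (sat M ?w (alls L1 L2 [:: 0; 1] ?p)) with (sat M w (FAll 0 (FAll 1 p))).
    move/sat_FAll => /(_ x) /sat_FAll /(_ y) /sat_FImp; rewrite !Hs //.
  + move=> x y z; have := H _ (or_intror (or_intror (or_introl erefl))) (fun _ => x).
    change (sat M ?w (alls L1 L2 [:: 0; 1; 2] ?p)) with (sat M w (FAll 0 (FAll 1 (FAll 2 p)))).
    move/sat_FAll => /(_ x) /sat_FAll /(_ y) /sat_FAll /(_ z) /sat_FImp.
    change (sat M ?w (FAnd ?p ?q)) with (sat M w p /\ sat M w q).
    rewrite !Hs /= => Himp H1 H2; exact: Himp.
Qed.

Lemma inP_cat {A} (a : A) s t : inP a (s ++ t) <-> inP a s \/ inP a t.
Proof. elim: s => [|b s IH] /=; [tauto| rewrite IH; tauto]. Qed.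

Lemma inP_drop {A} (a : A) n s : inP a (drop n s) -> inP a s.
Proof. elim: s n => [|b s IH] [|n] //= H; right; exact: IH H. Qed.

Lemma Tx_iff : TxSem <-> forall p, inP p (Tx_axioms L1 L2) -> forall v, sat M v p.
Proof.
have E1 := equiv_ax_sem (fsim1 L1 L2) r1 (sat_fsim1 L1 L2 M).
have E2 := equiv_ax_sem (fsim2 L1 L2) r2 (sat_fsim2 L1 L2 M).
split.
- move=> [Q1 Q2 Q3 Q4] p; rewrite /Tx_axioms !inP_cat => [[H|[H|H]]].
  + exact: (proj1 E1 Q1).
  + exact: (proj1 E2 Q2).
  + move: H => /= [->|[->|[]]] v.
    * change (sat M v (FAll 0 (FAll 1 (FImp (FAnd (fsim1 L1 L2 (Defs.v L1 L2 0) (Defs.v L1 L2 1)) (fsim2 L1 L2 (Defs.v L1 L2 0) (Defs.v L1 L2 1))) (FEq (Defs.v L1 L2 0) (Defs.v L1 L2 1)))))).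
      apply/sat_FAll => a; apply/sat_FAll => b; apply/sat_FImp.
      change (sat M ?w (FAnd ?p ?q)) with (sat M w p /\ sat M w q).
      rewrite sat_fsim1 sat_fsim2 /= => [[H1 H2]]; exact: Q3.
    * change (sat M v (FAll 0 (FAll 1 (FEx 2 (FAnd (fsim1 L1 L2 (Defs.v L1 L2 0) (Defs.v L1 L2 2)) (fsim2 L1 L2 (Defs.v L1 L2 1) (Defs.v L1 L2 2))))))).
      apply/sat_FAll => a; apply/sat_FAll => b.
      have [z [Hz1 Hz2]] := Q4 a b; exists z.
      change (sat M ?w (FAnd ?p ?q)) with (sat M w p /\ sat M w q).
      rewrite sat_fsim1 sat_fsim2 /=; by split.
- move=> H.
  have H1 : forall p, inP p (equiv_axioms L1 L2 (fsim1 L1 L2)) -> forall v, sat M v p.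
    move=> p Hp; apply: H; rewrite /Tx_axioms inP_cat; by left.
  have H2 : forall p, inP p (equiv_axioms L1 L2 (fsim2 L1 L2)) -> forall v, sat M v p.
    move=> p Hp; apply: H; rewrite /Tx_axioms !inP_cat; by right; left.
  have H3 : forall p, inP p (drop 6 (Tx_axioms L1 L2)) -> forall v, sat M v p.
    move=> p Hp; apply: H; exact: inP_drop Hp.
  split; [exact: (proj2 E1 H1)|exact: (proj2 E2 H2)| |].
  + move=> x y Hxy1 Hxy2.
    have := H3 _ (or_introl erefl) (fun _ => x).
    change (sat M ?w (alls L1 L2 [:: 0; 1] ?p)) with (sat M w (FAll 0 (FAll 1 p))).
    move/sat_FAll => /(_ x) /sat_FAll /(_ y) /sat_FImp.
    change (sat M ?w (FAnd ?p ?q)) with (sat M w p /\ sat M w q).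
    rewrite sat_fsim1 sat_fsim2 /=; move=> Himp; exact: Himp.
  + move=> x y.
    have := H3 _ (or_intror (or_introl erefl)) (fun _ => x).
    change (sat M ?w (alls L1 L2 [:: 0; 1] ?p)) with (sat M w (FAll 0 (FAll 1 p))).
    move/sat_FAll => /(_ x) /sat_FAll /(_ y) /sat_FEx [z /sat_FAnd].
    rewrite sat_fsim1 sat_fsim2 /= => Hz; by exists z.
Qed.

End Tx.

Section Inv1.
Variables L1 L2 : lang.
Variable M : structure (Lsim L1 L2).

Lemma inv1_sound (R' : psym L1) :
  (forall f g : 'I_(arity R') -> M, (forall i, rel1 L1 L2 M (f i) (g i)) ->
     (ipred M (SP1 L1 L2 R') f <-> ipred M (SP1 L1 L2 R') g)) ->
  forall v, sat M v (invariance L1 L2 (fsim1 L1 L2) (SP1 L1 L2 R')).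
Proof.
move=> H v; rewrite /invariance; cbv zeta; rewrite sat_alls => w _.
rewrite sat_FImp sat_foldrAnd_nat sat_FIff => [[_ Hall]].
set n := sim_arity L1 L2 (SP1 L1 L2 R').
apply: (H (fun i => w i) (fun i => w (n + i))) => i.
have := Hall i; rewrite mem_iota leq0n add0n ltn_ord => /(_ isT); rewrite sat_fsim1 //.
Qed.

Lemma inv1_complete (m0 : M) (R' : psym L1) :
  (forall v, sat M v (invariance L1 L2 (fsim1 L1 L2) (SP1 L1 L2 R'))) ->
  forall f g : 'I_(arity R') -> M, (forall i, rel1 L1 L2 M (f i) (g i)) ->
     (ipred M (SP1 L1 L2 R') f <-> ipred M (SP1 L1 L2 R') g).
Proof.
move=> Hinv f g Hfg.
set n := arity R'.
pose w := fun k => if @insub _ (fun m => m < n) _ k is Some i then f i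
   else if @insub _ (fun m => m < n) _ (k - n) is Some i then g i else m0.
have Hf : (fun i : 'I_n => w i) = f.
  apply: functional_extensionality => i; by rewrite /w valK.
have Hg : (fun i : 'I_n => w (n + i)) = g.
  apply: functional_extensionality => i; rewrite /w insubF ?addKn ?valK //.
  by apply/negbTE; rewrite -leqNgt leq_addr.
have := Hinv w; rewrite /invariance; cbv zeta; rewrite sat_alls => /(_ w (fun _ _ => erefl)).
rewrite sat_FImp sat_foldrAnd_nat sat_FIff => Himp.
rewrite -{1}Hf -{1}Hg; apply: Himp; split => // i; rewrite mem_iota leq0n add0n => Hi.
rewrite sat_fsim1.
change (rel1 L1 L2 M (w i) (w (n + i))).
have -> : w i = f (Ordinal Hi) by rewrite /w insubT.
have -> : w (n + i) = g (Ordinal Hi).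
  rewrite /w insubF ?addKn ?insubT //.
  by apply/negbTE; rewrite -leqNgt leq_addr.
exact: Hfg.
Qed.

End Inv1.

Section Inv2.
Variables L1 L2 : lang.
Variable M : structure (Lsim L1 L2).

Lemma inv2_sound (R' : psym L2) :
  (forall f g : 'I_(arity R') -> M, (forall i, rel2 L1 L2 M (f i) (g i)) ->
     (ipred M (SP2 L1 L2 R') f <-> ipred M (SP2 L1 L2 R') g)) ->
  forall v, sat M v (invariance L1 L2 (fsim2 L1 L2) (SP2 L1 L2 R')).
Proof.
move=> H v; rewrite /invariance; cbv zeta; rewrite sat_alls => w _.
rewrite sat_FImp sat_foldrAnd_nat sat_FIff => [[_ Hall]].
set n := sim_arity L1 L2 (SP2 L1 L2 R').
apply: (H (fun i => w i) (fun i => w (n + i))) => i.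
have := Hall i; rewrite mem_iota leq0n add0n ltn_ord => /(_ isT); rewrite sat_fsim2 //.
Qed.

Lemma inv2_complete (m0 : M) (R' : psym L2) :
  (forall v, sat M v (invariance L1 L2 (fsim2 L1 L2) (SP2 L1 L2 R'))) ->
  forall f g : 'I_(arity R') -> M, (forall i, rel2 L1 L2 M (f i) (g i)) ->
     (ipred M (SP2 L1 L2 R') f <-> ipred M (SP2 L1 L2 R') g).
Proof.
move=> Hinv f g Hfg.
set n := arity R'.
pose w := fun k => if @insub _ (fun m => m < n) _ k is Some i then f i
   else if @insub _ (fun m => m < n) _ (k - n) is Some i then g i else m0.
have Hf : (fun i : 'I_n => w i) = f.
  apply: functional_extensionality => i; by rewrite /w valK.
have Hg : (fun i : 'I_n => w (n + i)) = g.
  apply: functional_extensionality => i; rewrite /w insubF ?addKn ?valK //.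
  by apply/negbTE; rewrite -leqNgt leq_addr.
have := Hinv w; rewrite /invariance; cbv zeta; rewrite sat_alls => /(_ w (fun _ _ => erefl)).
rewrite sat_FImp sat_foldrAnd_nat sat_FIff => Himp.
rewrite -{1}Hf -{1}Hg; apply: Himp; split => // i; rewrite mem_iota leq0n add0n => Hi.
rewrite sat_fsim2.
change (rel2 L1 L2 M (w i) (w (n + i))).
have -> : w i = f (Ordinal Hi) by rewrite /w insubT.
have -> : w (n + i) = g (Ordinal Hi).
  rewrite /w insubF ?addKn ?insubT //.
  by apply/negbTE; rewrite -leqNgt leq_addr.
exact: Hfg.
Qed.

End Inv2.

Section Prod.
Variables (L1 L2 : lang) (d1 : const L1) (d2 : const L2).
Variables (M1 : structure L1) (M2 : structure L2).

Definition prod_ipred (R : sim_pred L1 L2) : ('I_(sim_arity L1 L2 R) -> (M1 * M2)%type) -> Prop :=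
  match R as R0 return ('I_(sim_arity L1 L2 R0) -> (M1 * M2)%type) -> Prop with
  | SP1 R' => fun f => ipred M1 R' (fun i => (f i).1)
  | SP2 R' => fun f => ipred M2 R' (fun i => (f i).2)
  | Sim1 => fun f => (f ord0).1 = (f ord_max).1
  | Sim2 => fun f => (f ord0).2 = (f ord_max).2
  end.

Definition prodS : structure (Lsim L1 L2) :=
  @Structure (Lsim L1 L2) (M1 * M2)%type
    (fun c => (iconst M1 c.1, iconst M2 c.2)) prod_ipred.

Lemma prod_rel1 (x y : prodS) : rel1 L1 L2 prodS x y <-> x.1 = y.1.
Proof. done. Qed.
Lemma prod_rel2 (x y : prodS) : rel2 L1 L2 prodS x y <-> x.2 = y.2.
Proof. done. Qed.

Lemma prod_conv1 p (v : nat -> prodS) :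
  sat prodS v (conv1 L1 L2 d2 p) <-> sat M1 (fun k => (v k).1) p.
Proof.
apply: (conv1_sat L1 L2 d2 prodS M1 (fun x : prodS => x.1)) => //.
move=> y; by exists (y, iconst M2 d2).
Qed.

Lemma prod_conv2 p (v : nat -> prodS) :
  sat prodS v (conv2 L1 L2 d1 p) <-> sat M2 (fun k => (v k).2) p.
Proof.
apply: (conv2_sat L1 L2 d1 prodS M2 (fun x : prodS => x.2)) => //.
move=> y; by exists (iconst M1 d1, y).
Qed.

Lemma prod_model T1 T2 : model_of M1 T1 -> model_of M2 T2 -> model_of prodS (Tsim d1 d2 T1 T2).
Proof.
move=> H1 H2 p [Hp|[[s [Hs ->]]|[[s [Hs ->]]|[[R ->]|[R ->]]]]] v.
- move: p Hp v; apply/(Tx_iff L1 L2 prodS); split.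
  + split; [by []|split].
    * by move=> x y /prod_rel1 H; apply/prod_rel1; rewrite H.
    * by move=> x y z /prod_rel1 H /prod_rel1 H'; apply/prod_rel1; rewrite H H'.
  + split; [by []|split].
    * by move=> x y /prod_rel2 H; apply/prod_rel2; rewrite H.
    * by move=> x y z /prod_rel2 H /prod_rel2 H'; apply/prod_rel2; rewrite H H'.
  + move=> [x1 x2] [y1 y2] E1 E2; move/prod_rel1: E1 => /= ->; move/prod_rel2: E2 => /= -> //.
  + move=> [x1 x2] [y1 y2]; exists (x1, y2); by split.
- rewrite prod_conv1; exact: H1.
- rewrite prod_conv2; exact: H2.
- apply: inv1_sound => f g Hfg /=.
  have -> : (fun i => (f i).1) = (fun i => (g i).1) by apply: functional_extensionality => i; exact: Hfg.
  done.
- apply: inv2_sound => f g Hfg /=.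
  have -> : (fun i => (f i).2) = (fun i => (g i).2) by apply: functional_extensionality => i; exact: Hfg.
  done.
Qed.

End Prod.

Lemma dir1_T1 (L1 L2 : lang) (d1 : const L1) (d2 : const L2) T1 T2 p xs :
  consistent T2 -> has_IP T1 p xs -> has_IP (Tsim d1 d2 T1 T2) (conv1 L1 L2 d2 p) xs.
Proof.
move=> [M2 HM2] [M1 [HM1 [a [b H]]]].
exists (prodS L1 L2 M1 M2); split; first exact: prod_model.
exists (fun i k => (a i k, iconst M2 d2)), (fun I k => (b I k, iconst M2 d2)) => i I.
rewrite prod_conv1.
have -> : (fun k => (mix xs (fun k0 => (a i k0, iconst M2 d2)) (fun k0 => (b I k0, iconst M2 d2)) k).1)
   = mix xs (a i) (b I) by apply: functional_extensionality => k; rewrite /mix; case: ifP.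
exact: H.
Qed.

Lemma dir1_T2 (L1 L2 : lang) (d1 : const L1) (d2 : const L2) T1 T2 p xs :
  consistent T1 -> has_IP T2 p xs -> has_IP (Tsim d1 d2 T1 T2) (conv2 L1 L2 d1 p) xs.
Proof.
move=> [M1 HM1] [M2 [HM2 [a [b H]]]].
exists (prodS L1 L2 M1 M2); split; first exact: prod_model.
exists (fun i k => (iconst M1 d1, a i k)), (fun I k => (iconst M1 d1, b I k)) => i I.
rewrite prod_conv2.
have -> : (fun k => (mix xs (fun k0 => (iconst M1 d1, a i k0)) (fun k0 => (iconst M1 d1, b I k0)) k).2)
   = mix xs (a i) (b I) by apply: functional_extensionality => k; rewrite /mix; case: ifP.
exact: H.
Qed.

Section Quot.
Variables (A : Type) (E : A -> A -> Prop).
Hypothesis HE : equivR E.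

Definition Q := {P : A -> Prop | exists x, P = E x}.
Definition cls (x : A) : Q := exist _ (E x) (ex_intro _ x erefl).
Definition rep (q : Q) : A := proj1_sig (constructive_indefinite_description _ (proj2_sig q)).

Lemma sig_eqP (P1 P2 : A -> Prop) h1 h2 : P1 = P2 ->
  exist (fun P => exists x, P = E x) P1 h1 = exist _ P2 h2.
Proof. move=> E12; subst; f_equal; apply: proof_irrelevance. Qed.

Lemma rep_spec q : proj1_sig q = E (rep q).
Proof. rewrite /rep; by case: (constructive_indefinite_description _ _). Qed.

Lemma cls_rep q : cls (rep q) = q.
Proof. case: q => P HP; rewrite /cls; apply: sig_eqP; have := rep_spec (exist _ P HP); simpl; move=> H; exact: (esym H). Qed.

Lemma cls_eq x y : cls x = cls y <-> E x y.
Proof.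
have [Hr [Hs Ht]] := HE.
split.
- move/(f_equal (fun q => proj1_sig q y)) => /= ->; exact: Hr.
- move=> Hxy; apply: sig_eqP; apply: functional_extensionality => z.
  apply: propositional_extensionality; split => H.
  + exact: Ht (Hs _ _ Hxy) H.
  + exact: Ht Hxy H.
Qed.

Lemma rep_cls x : E (rep (cls x)) x.
Proof. apply/cls_eq; exact: cls_rep. Qed.

Lemma cls_surj q : exists x, cls x = q.
Proof. exists (rep q); exact: cls_rep. Qed.

End Quot.
Arguments cls {A} E x. Arguments rep {A} E q. Arguments cls_rep {A E} q.
Arguments cls_eq {A E} HE x y. Arguments rep_cls {A E} HE x. Arguments cls_surj {A E} q.

Section QS.
Variables (L1 L2 : lang) (d1 : const L1) (d2 : const L2) (T1 : theory L1) (T2 : theory L2).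
Variable M : structure (Lsim L1 L2).
Hypothesis HM : model_of M (Tsim d1 d2 T1 T2).

Lemma HTx : TxSem L1 L2 M.
Proof. apply/Tx_iff => p Hp v; apply: HM; by left. Qed.

Lemma Hinv1 (R' : psym L1) (f g : 'I_(arity R') -> M) : (forall i, rel1 L1 L2 M (f i) (g i)) ->
     (ipred M (SP1 L1 L2 R') f <-> ipred M (SP1 L1 L2 R') g).
Proof.
apply: (inv1_complete L1 L2 M (iconst M (d1, d2))) => v; apply: HM.
right; right; right; left; by exists R'.
Qed.

Lemma Hinv2 (R' : psym L2) (f g : 'I_(arity R') -> M) : (forall i, rel2 L1 L2 M (f i) (g i)) ->
     (ipred M (SP2 L1 L2 R') f <-> ipred M (SP2 L1 L2 R') g).
Proof.
apply: (inv2_complete L1 L2 M (iconst M (d1, d2))) => v; apply: HM.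
right; right; right; right; by exists R'.
Qed.

Definition E1 := rel1 L1 L2 M.
Definition E2 := rel2 L1 L2 M.
Lemma E1eq : equivR E1. Proof. by case: HTx. Qed.
Lemma E2eq : equivR E2. Proof. by case: HTx. Qed.

Definition N1 : structure L1 :=
  @Structure L1 (Q M E1) (fun c => cls E1 (iconst M (c, d2)))
    (fun R f => ipred M (SP1 L1 L2 R) (fun i => rep _ (f i))).
Definition N2 : structure L2 :=
  @Structure L2 (Q M E2) (fun c => cls E2 (iconst M (d1, c)))
    (fun R f => ipred M (SP2 L1 L2 R) (fun i => rep _ (f i))).
Definition q1 (x : M) : N1 := cls E1 x.
Definition q2 (x : M) : N2 := cls E2 x.

Lemma q1_eq x y : q1 x = q1 y <-> E1 x y. Proof. exact: (cls_eq E1eq). Qed.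
Lemma q2_eq x y : q2 x = q2 y <-> E2 x y. Proof. exact: (cls_eq E2eq). Qed.

Lemma N1_HR R (f : 'I_(arity R) -> M) :
  ipred M (SP1 L1 L2 R) f <-> ipred N1 R (fun i => q1 (f i)).
Proof.
apply: Hinv1 => i; have [_ [Hs _]] := E1eq; apply: Hs; exact: (rep_cls E1eq).
Qed.

Lemma N2_HR R (f : 'I_(arity R) -> M) :
  ipred M (SP2 L1 L2 R) f <-> ipred N2 R (fun i => q2 (f i)).
Proof.
apply: Hinv2 => i; have [_ [Hs _]] := E2eq; apply: Hs; exact: (rep_cls E2eq).
Qed.

Lemma N1_conv p v : sat M v (conv1 L1 L2 d2 p) <-> sat N1 (fun k => q1 (v k)) p.
Proof.
apply: conv1_sat => //.
- exact: cls_surj.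
- move=> x y; rewrite q1_eq //.
- exact: N1_HR.
Qed.

Lemma N2_conv p v : sat M v (conv2 L1 L2 d1 p) <-> sat N2 (fun k => q2 (v k)) p.
Proof.
apply: conv2_sat => //.
- exact: cls_surj.
- move=> x y; rewrite q2_eq //.
- exact: N2_HR.
Qed.

Lemma N1_model : model_of N1 T1.
Proof.
move=> s Hs w.
have -> : w = (fun k => q1 (rep E1 (w k))) by apply: functional_extensionality => k; rewrite /q1 cls_rep.
apply/N1_conv; apply: HM; right; left; by exists s.
Qed.

Lemma N2_model : model_of N2 T2.
Proof.
move=> s Hs w.
have -> : w = (fun k => q2 (rep E2 (w k))) by apply: functional_extensionality => k; rewrite /q2 cls_rep.
apply/N2_conv; apply: HM; right; right; left; by exists s.
Qed.

Lemma q_pair (a1 : N1) (a2 : N2) : exists m, q1 m = a1 /\ q2 m = a2.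
Proof.
have [x <-] := cls_surj a1; have [y <-] := cls_surj a2.
case: HTx => _ _ _ H4; have [z [Hz1 Hz2]] := H4 x y.
have [_ [S1 _]] := E1eq; have [_ [S2 _]] := E2eq.
exists z; split; [apply: (proj2 (q1_eq z x)); exact: S1 _ _ Hz1|apply: (proj2 (q2_eq z y)); exact: S2 _ _ Hz2].
Qed.

Lemma q_inj x y : q1 x = q1 y -> q2 x = q2 y -> x = y.
Proof. move/q1_eq => H1 /q2_eq H2; case: HTx => _ _ H3 _; exact: H3. Qed.

End QS.

Section Elim.
Variable L : lang.

Fixpoint bnd (p : formula L) : nat :=
  match p with
  | FEq t u => maxn (var_index t) (var_index u)
  | FAtom R ts => \max_(i < arity R) var_index (ts i)
  | FNeg q => bnd q
  | FAnd q r => maxn (bnd q) (bnd r)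
  | FEx x q => maxn x (bnd q)
  end.

Fixpoint occ (c : const L) (p : formula L) : Prop :=
  match p with
  | FEq t u => t = TConst c \/ u = TConst c
  | FAtom R ts => exists i, ts i = TConst c
  | FNeg q => occ c q
  | FAnd q r => occ c q \/ occ c r
  | FEx x q => occ c q
  end.

Lemma inP_cat' {A} (a : A) s t : inP a (s ++ t) <-> inP a s \/ inP a t.
Proof. elim: s => [|b s IH] /=; [tauto| rewrite IH; tauto]. Qed.

Lemma inP_pmap {A : Type} {I : eqType} (f : I -> option A) (s : seq I) (c : A) i :
  i \in s -> f i = Some c -> inP c (pmap f s).
Proof.
elim: s => [|j s IH] //=; rewrite inE => /orP [/eqP <-|Hi] Hf.
- rewrite Hf /=; by left.
- case: (f j) => [a|] /=; last exact: IH.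
  right; exact: IH.
Qed.

Lemma consts_ex p : exists cs : seq (const L), forall c, occ c p -> inP c cs.
Proof.
elim: p => [t u|R ts|q IH|q [cq Hq] r [cr Hr]|x q IH] //.
- exists ((if t is TConst c then [:: c] else [::]) ++ (if u is TConst c then [:: c] else [::])).
  move=> c [->|->]; rewrite inP_cat' /=; [left|right]; by left.
- exists (pmap (fun i => if ts i is TConst c then Some c else None) (enum 'I_(arity R))).
  move=> c [i Hi]; apply: (inP_pmap _ _ _ i); first by rewrite mem_enum.
  by rewrite Hi.
- exists (cq ++ cr) => c [H|H]; rewrite inP_cat'; [left; exact: Hq|right; exact: Hr].
Qed.

Definition et (rho : const L -> nat) (t : term (const L)) : term (const L) :=
  match t with TVar x => TVar x | TConst c => TVar (rho c) end.

Fixpoint elimc (rho : const L -> nat) (p : formula L) : formula L :=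
  match p with
  | FEq t u => FEq (et rho t) (et rho u)
  | FAtom R ts => FAtom R (fun i => et rho (ts i))
  | FNeg q => FNeg (elimc rho q)
  | FAnd q r => FAnd (elimc rho q) (elimc rho r)
  | FEx x q => FEx x (elimc rho q)
  end.

Lemma elimc_noocc rho p c : ~ occ c (elimc rho p).
Proof.
elim: p => [t u|R ts|q IH|q IHq r IHr|x q IH] /=.
- by case: t => [?|?]; case: u => [?|?] [].
- by move=> [i]; case: (ts i).
- exact: IH.
- tauto.
- exact: IH.
Qed.

Variable M : structure L.

Lemma eval_et rho B (v v' : nat -> M) t :
  var_index t < B -> (forall k, k < B -> v' k = v k) ->
  (forall c, t = TConst c -> v' (rho c) = iconst M c) ->
  eval M v t = eval M v' (et rho t).
Proof.
case: t => [x|c] /= Hb Hv Hc; first by rewrite Hv.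
by rewrite Hc.
Qed.

Lemma elimc_sat rho B p (v v' : nat -> M) :
  bnd p < B -> (forall k, k < B -> v' k = v k) ->
  (forall c, occ c p -> v' (rho c) = iconst M c /\ B <= rho c) ->
  (sat M v p <-> sat M v' (elimc rho p)).
Proof.
elim: p v v' => [t u|R ts|q IH|q IHq r IHr|x q IH] v v' /= Hb Hv Hc.
- rewrite (eval_et rho B v v' t) ?(eval_et rho B v v' u) //.
  + by rewrite (leq_ltn_trans _ Hb) // leq_maxr.
  + move=> c Hu; by case: (Hc c (or_intror Hu)).
  + by rewrite (leq_ltn_trans _ Hb) // leq_maxl.
  + move=> c Ht; by case: (Hc c (or_introl Ht)).
- have -> : (fun i => eval M v (ts i)) = (fun i => eval M v' (et rho (ts i))) => //.
  apply: functional_extensionality => i; apply: (eval_et rho B) => //.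
  + by rewrite (leq_ltn_trans _ Hb) // (leq_bigmax i).
  + move=> c Hi; by case: (Hc c (ex_intro _ i Hi)).
- by rewrite (IH v v').
- rewrite (IHq v v') ?(IHr v v') //.
  + by rewrite (leq_ltn_trans _ Hb) // leq_maxr.
  + move=> c H; exact: Hc c (or_intror H).
  + by rewrite (leq_ltn_trans _ Hb) // leq_maxl.
  + move=> c H; exact: Hc c (or_introl H).
- have Hx : x < B by rewrite (leq_ltn_trans _ Hb) // leq_maxl.
  have Hq : bnd q < B by rewrite (leq_ltn_trans _ Hb) // leq_maxr.
  split => [[a Ha]|[a Ha]]; exists a.
  + apply/(IH (upd v x a)) => //.
    * move=> k Hk; by rewrite /upd; case: eqP => // _; rewrite Hv.
    * move=> c Hcq; have [E1 E2] := Hc c Hcq; split => //.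
      rewrite /upd; case: eqP => [Heq|_ //]; exfalso; move: Hx; by rewrite -Heq ltnNge E2.
  + apply/(IH (upd v x a) (upd v' x a)) => //.
    * move=> k Hk; by rewrite /upd; case: eqP => // _; rewrite Hv.
    * move=> c Hcq; have [E1 E2] := Hc c Hcq; split => //.
      rewrite /upd; case: eqP => [Heq|_ //]; exfalso; move: Hx; by rewrite -Heq ltnNge E2.
Qed.

Fixpoint lookup {A} (s : seq A) (n : nat) : option A :=
  match s, n with
  | [::], _ => None
  | a :: _, 0 => Some a
  | _ :: s', n'.+1 => lookup s' n'
  end.

Fixpoint idx {A} (c : A) (s : seq A) : nat :=
  match s with
  | [::] => 0
  | a :: s' => if excluded_middle_informative (c = a) then 0 else (idx c s').+1
  end.

Lemma lookup_idx {A} (c : A) s : inP c s -> lookup s (idx c s) = Some c.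
Proof.
elim: s => [|a s IH] //= H.
case: excluded_middle_informative => [Heq|Hne] /=; first by rewrite Heq.
apply: IH; case: H => // Heq; by case: Hne.
Qed.

Definition smax (s : seq nat) := foldr maxn 0 s.
Lemma smax_ge s x : x \in s -> x <= smax s.
Proof.
elim: s => [|y s IH] //=; rewrite inE => /orP [/eqP ->|H]; first exact: leq_maxl.
exact: leq_trans (IH H) (leq_maxr _ _).
Qed.

Lemma ip_elim (p : formula L) xs (a : nat -> nat -> M) (b : (nat -> Prop) -> nat -> M) :
  (forall i I, sat M (mix xs (a i) (b I)) p <-> I i) ->
  exists p' b', (forall c, ~ occ c p') /\
     (forall i I, sat M (mix xs (a i) (b' I)) p' <-> I i).
Proof.
move=> H.
have [cs Hcs] := consts_ex p.
set B := (maxn (bnd p) (smax xs)).+1.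
pose rho := fun c => B + idx c cs.
pose b' := fun I k => if B <= k then (if lookup cs (k - B) is Some c then iconst M c else b I k) else b I k.
exists (elimc rho p), b'; split; first exact: elimc_noocc.
move=> i I; rewrite -(H i I); symmetry; apply: (elimc_sat rho B).
- by rewrite ltnS leq_maxl.
- move=> k Hk; rewrite /mix /b'; case: ifP => // _; by rewrite leqNgt Hk.
- move=> c Hc; split; last exact: leq_addr.
  have Hnx : rho c \notin xs.
    apply/negP => /smax_ge; rewrite /rho => Hle.
    have : B <= smax xs by exact: leq_trans (leq_addr _ _) Hle.
    by rewrite ltnNge leq_maxr.
  rewrite /mix (negbTE Hnx) /b' /rho leq_addr addKn lookup_idx //; exact: Hcs.
Qed.

End Elim.

Section DNF.
Variables L1 L2 : lang.

Definition ttr1 (t : term (const (Lsim L1 L2))) : term (const L1) :=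
  match t with TVar x => TVar x | TConst c => TConst c.1 end.
Definition ttr2 (t : term (const (Lsim L1 L2))) : term (const L2) :=
  match t with TVar x => TVar x | TConst c => TConst c.2 end.
Definition top1 : formula L1 := FEq (TVar 0) (TVar 0).
Definition top2 : formula L2 := FEq (TVar 0) (TVar 0).

Definition fvatom (R : sim_pred L1 L2) :
  ('I_(sim_arity L1 L2 R) -> term (const L1 * const L2)) -> seq (formula L1 * formula L2) :=
  match R as R0 return ('I_(sim_arity L1 L2 R0) -> term (const L1 * const L2)) -> seq (formula L1 * formula L2) with
  | SP1 R' => fun ts => [:: (FAtom R' (fun i => ttr1 (ts i)), top2)]
  | SP2 R' => fun ts => [:: (top1, FAtom R' (fun i => ttr2 (ts i)))]
  | Sim1 => fun ts => [:: (FEq (ttr1 (ts ord0)) (ttr1 (ts ord_max)), top2)]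
  | Sim2 => fun ts => [:: (top1, FEq (ttr2 (ts ord0)) (ttr2 (ts ord_max)))]
  end.

Fixpoint dneg (l : seq (formula L1 * formula L2)) : seq (formula L1 * formula L2) :=
  match l with
  | [::] => [:: (top1, top2)]
  | pq :: l' => [seq (FAnd (FNeg pq.1) gh.1, gh.2) | gh <- dneg l'] ++
                [seq (gh.1, FAnd (FNeg pq.2) gh.2) | gh <- dneg l']
  end.

Definition dand (l1 l2 : seq (formula L1 * formula L2)) :=
  flatten [seq [seq (FAnd pq.1 gh.1, FAnd pq.2 gh.2) | gh <- l2] | pq <- l1].

Fixpoint fv (p : formula (Lsim L1 L2)) : seq (formula L1 * formula L2) :=
  match p with
  | FEq t u => [:: (FEq (ttr1 t) (ttr1 u), FEq (ttr2 t) (ttr2 u))]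
  | FAtom R ts => fvatom R ts
  | FNeg q => dneg (fv q)
  | FAnd q r => dand (fv q) (fv r)
  | FEx x q => [seq (FEx x pq.1, FEx x pq.2) | pq <- fv q]
  end.

Variables (A1 : structure L1) (A2 : structure L2).

Fixpoint dsat (u1 : nat -> A1) (u2 : nat -> A2) (l : seq (formula L1 * formula L2)) : Prop :=
  match l with
  | [::] => False
  | pq :: l' => (sat A1 u1 pq.1 /\ sat A2 u2 pq.2) \/ dsat u1 u2 l'
  end.

Lemma dsat_cat u1 u2 l l' : dsat u1 u2 (l ++ l') <-> dsat u1 u2 l \/ dsat u1 u2 l'.
Proof. elim: l => [|pq l IH] /=; [tauto|rewrite IH; tauto]. Qed.

Lemma dsat_mapL u1 u2 a l :
  dsat u1 u2 [seq (FAnd a gh.1, gh.2) | gh <- l] <-> sat A1 u1 a /\ dsat u1 u2 l.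
Proof. elim: l => [|pq l IH] /=; [tauto|rewrite IH; tauto]. Qed.

Lemma dsat_mapR u1 u2 a l :
  dsat u1 u2 [seq (gh.1, FAnd a gh.2) | gh <- l] <-> sat A2 u2 a /\ dsat u1 u2 l.
Proof. elim: l => [|pq l IH] /=; [tauto|rewrite IH; tauto]. Qed.

Lemma dsat_dneg u1 u2 l : dsat u1 u2 (dneg l) <-> ~ dsat u1 u2 l.
Proof.
elim: l => [|pq l IH] /=; first by split; [move=> _ []|move=> _; left].
rewrite dsat_cat dsat_mapL dsat_mapR IH.
change (sat A1 u1 (FNeg pq.1)) with (~ sat A1 u1 pq.1).
change (sat A2 u2 (FNeg pq.2)) with (~ sat A2 u2 pq.2).
tauto.
Qed.

Lemma dsat_dand u1 u2 l l' : dsat u1 u2 (dand l l') <-> dsat u1 u2 l /\ dsat u1 u2 l'.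
Proof.
rewrite /dand; elim: l => [|pq l IH] /=; first tauto.
have E : forall l'', dsat u1 u2 [seq (FAnd pq.1 gh.1, FAnd pq.2 gh.2) | gh <- l''] <->
   (sat A1 u1 pq.1 /\ sat A2 u2 pq.2) /\ dsat u1 u2 l''.
  move=> l''; elim: l'' => [|gh l'' IH'] /=; [tauto|rewrite IH'; tauto].
rewrite dsat_cat IH E; tauto.
Qed.
Lemma dsat_ex u1 u2 x l :
  dsat u1 u2 [seq (FEx x pq.1, FEx x pq.2) | pq <- l] <->
  exists a1 a2, dsat (upd u1 x a1) (upd u2 x a2) l.
Proof.
split.
- elim: l => [|pq l IH] //= [[[a1 H1] [a2 H2]]|H].
  + exists a1, a2; by left.
  + have [a1 [a2 H']] := IH H; exists a1, a2; by right.
- move=> [a1 [a2]]; elim: l => [|pq l IH] //= [[H1 H2]|H].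
  + left; split; [by exists a1|by exists a2].
  + right; exact: IH.
Qed.

End DNF.

Section FVsem.
Variables (L1 L2 : lang) (d1 : const L1) (d2 : const L2) (T1 : theory L1) (T2 : theory L2).
Variable M : structure (Lsim L1 L2).
Hypothesis HM : model_of M (Tsim d1 d2 T1 T2).
Notation N1 := (N1 L1 L2 d2 M).
Notation N2 := (N2 L1 L2 d1 M).
Notation q1 := (q1 L1 L2 d2 M).
Notation q2 := (q2 L1 L2 d1 M).

Lemma sim1_pair (f : 'I_2 -> M) : ipred M (Sim1 L1 L2) f <-> rel1 L1 L2 M (f ord0) (f ord_max).
Proof.
rewrite /rel1.
have -> : (fun i : 'I_2 => if val i == 0 then f ord0 else f ord_max) = f => //.
apply: functional_extensionality => -[[|[|n]] Hi] /=.
- congr f; exact: val_inj.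
- congr f; exact: val_inj.
- by [].
Qed.

Lemma sim2_pair (f : 'I_2 -> M) : ipred M (Sim2 L1 L2) f <-> rel2 L1 L2 M (f ord0) (f ord_max).
Proof.
rewrite /rel2.
have -> : (fun i : 'I_2 => if val i == 0 then f ord0 else f ord_max) = f => //.
apply: functional_extensionality => -[[|[|n]] Hi] /=.
- congr f; exact: val_inj.
- congr f; exact: val_inj.
- by [].
Qed.

Lemma eval_ttr1 (w : nat -> M) t : (forall c, t <> TConst c) ->
  eval N1 (fun k => q1 (w k)) (ttr1 L1 L2 t) = q1 (eval M w t).
Proof. case: t => [x|c] //= H; by case: (H c). Qed.

Lemma eval_ttr2 (w : nat -> M) t : (forall c, t <> TConst c) ->
  eval N2 (fun k => q2 (w k)) (ttr2 L1 L2 t) = q2 (eval M w t).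
Proof. case: t => [x|c] //= H; by case: (H c). Qed.

Lemma fv_sat p (w : nat -> M) : (forall c, ~ occ _ c p) ->
  sat M w p <-> dsat L1 L2 N1 N2 (fun k => q1 (w k)) (fun k => q2 (w k)) (fv L1 L2 p).
Proof.
elim: p w => [t u|R ts|q IH|q IHq r IHr|x q IH] w Hc.
- have Ht : forall c, t <> TConst c by move=> c Ht; apply: (Hc c); left.
  have Hu : forall c, u <> TConst c by move=> c Hu; apply: (Hc c); right.
  rewrite /= (eval_ttr1 w t Ht) (eval_ttr1 w u Hu) (eval_ttr2 w t Ht) (eval_ttr2 w u Hu).
  split; first by move=> ->; left.
  move=> [[H1 H2]|[]]; exact: (q_inj L1 L2 d1 d2 T1 T2 M HM).
- have Hts : forall i c, ts i <> TConst c by move=> i c Hi; apply: (Hc c); exists i.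
  move: ts Hts {Hc}; case: R => [R'|R'||] ts Hts; cbn [sat dsat fvatom fst snd fv].
  + have -> : (fun i => eval N1 (fun k => q1 (w k)) (ttr1 L1 L2 (ts i))) =
              (fun i => q1 (eval M w (ts i))).
      by apply: functional_extensionality => i; rewrite eval_ttr1.
    rewrite -(N1_HR L1 L2 d1 d2 T1 T2 M HM).
    split; [move=> H; left; by split|by move=> [[H _]|[]]].
  + have -> : (fun i => eval N2 (fun k => q2 (w k)) (ttr2 L1 L2 (ts i))) =
              (fun i => q2 (eval M w (ts i))).
      by apply: functional_extensionality => i; rewrite eval_ttr2.
    rewrite -(N2_HR L1 L2 d1 d2 T1 T2 M HM); split; [move=> H; left; by split|by move=> [[_ H]|[]]].
  + rewrite sim1_pair !eval_ttr1 // (q1_eq L1 L2 d1 d2 T1 T2 M HM).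
    split; [move=> H; left; by split|by move=> [[H _]|[]]].
  + rewrite sim2_pair !eval_ttr2 // (q2_eq L1 L2 d1 d2 T1 T2 M HM).
    split; [move=> H; left; by split|by move=> [[_ H]|[]]].
- rewrite /= dsat_dneg IH //.
- rewrite /= dsat_dand IHq ?IHr // => c H; apply: (Hc c); [right|left]; exact: H.
- rewrite /= dsat_ex; split.
  + move=> [m /IH Hm]; exists (q1 m), (q2 m).
    have <- : (fun k => q1 (upd w x m k)) = upd (fun k => q1 (w k)) x (q1 m) by
      apply: functional_extensionality => k; rewrite /upd; case: eqP.
    have <- : (fun k => q2 (upd w x m k)) = upd (fun k => q2 (w k)) x (q2 m) by
      apply: functional_extensionality => k; rewrite /upd; case: eqP.
    apply: Hm => c; exact: Hc.
  + move=> [a1 [a2 H]].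
    have [m [Ea Eb]] := q_pair L1 L2 d1 d2 T1 T2 M HM a1 a2; subst a1 a2.
    exists m; apply/IH; first exact: Hc.
    have -> : (fun k => q1 (upd w x m k)) = upd (fun k => q1 (w k)) x (q1 m) by
      apply: functional_extensionality => k; rewrite /upd; case: eqP.
    have -> : (fun k => q2 (upd w x m k)) = upd (fun k => q2 (w k)) x (q2 m) by
      apply: functional_extensionality => k; rewrite /upd; case: eqP.
    exact: H.
Qed.

End FVsem.

Section Pajor.
Variable T : finType.

Definition shb (F : {set {set T}}) (A : {set T}) : bool :=
  [forall B : {set T}, (B \subset A) ==> [exists C in F, C :&: A == B]].

Lemma shbP (F : {set {set T}}) (A : {set T}) :
  reflect (forall B : {set T}, B \subset A -> exists2 C, C \in F & C :&: A = B) (shb F A).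
Proof.
apply: (iffP forallP) => H B.
- move=> HB; have /implyP /(_ HB) /existsP [C /andP [HC /eqP E]] := H B; by exists C.
- apply/implyP => HB; have [C HC E] := H B HB; apply/existsP; exists C; by rewrite HC E eqxx.
Qed.

Definition shS (F : {set {set T}}) := [set A | shb F A].

Lemma shb_mono (F G : {set {set T}}) A : F \subset G -> shb F A -> shb G A.
Proof.
move=> sFG /shbP H; apply/shbP => B HB; have [C HC E] := H B HB; exists C => //; exact: (subsetP sFG).
Qed.

Lemma pajor_n n (F : {set {set T}}) : #|F| <= n -> #|F| <= #|shS F|.
Proof.
elim: n F => [|n IH] F HF; first by move: HF; rewrite leqn0 => /eqP ->.
case: (leqP #|F| 1) => H1.
- case: (posnP #|F|) => [->//|/card_gt0P [C0 HC0]].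
  apply: (leq_trans H1); apply/card_gt0P; exists set0; rewrite inE.
  apply/shbP => B; rewrite subset0 => /eqP ->; exists C0 => //; exact: setI0.
- have [C1 [C2 [HC1 HC2 Hne]]] := card_gt1P H1.
  have [x Hx] : exists x, (x \in C1) != (x \in C2).
    apply/existsP; apply: contraNT Hne => /existsPn H; apply/eqP/setP => y.
    by have := H y; rewrite negbK => /eqP.
  have [Ca [Cb [HCa HCb [xa xb]]]] : exists Ca Cb, [/\ Ca \in F, Cb \in F & x \in Ca /\ x \notin Cb].
    case E1: (x \in C1); move: Hx; rewrite E1.
    + move=> Hx; exists C1, C2; split => //; split => //; by rewrite eq_sym in Hx; apply/negP => H; move: Hx; rewrite H.
    + move=> Hx; exists C2, C1; split => //; split => //; [by move: Hx; case: (x \in C2)|by rewrite E1].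
  pose X := [set C : {set T} | x \in C].
  pose F1 := F :&: X.
  pose F0 := F :\: X.
  have Hcard : #|F1| + #|F0| = #|F| by rewrite cardsID.
  have F1pos : 0 < #|F1| by apply/card_gt0P; exists Ca; rewrite !inE HCa xa.
  have F0pos : 0 < #|F0| by apply/card_gt0P; exists Cb; rewrite !inE HCb (negbTE xb).
  have HF1 : #|F1| <= n by rewrite -ltnS (leq_trans _ HF) // -Hcard -addn1 leq_add2l.
  have HF0 : #|F0| <= n by rewrite -ltnS (leq_trans _ HF) // -Hcard -add1n leq_add2r.
  have IH1 := IH F1 HF1; have IH0 := IH F0 HF0.
  set S0 := shS F0; set S1 := shS F1.
  have sub0 : F0 \subset F by exact: subsetDl.
  have sub1 : F1 \subset F by exact: subsetIl.
  have nx0 : forall A, A \in S0 -> x \notin A.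
    move=> A; rewrite inE => /shbP H; apply/negP => xA.
    have Hs : [set x] \subset A by rewrite sub1set.
    have [C HC E] := H [set x] Hs.
    move: HC; rewrite !inE => /andP [/negP HCx _]; apply: HCx.
    have : x \in C :&: A by rewrite E set11.
    by rewrite inE => /andP [].
  have nx1 : forall A, A \in S1 -> x \notin A.
    move=> A; rewrite inE => /shbP H; apply/negP => xA.
    have [C HC E] := H set0 (sub0set _).
    move: HC; rewrite !inE => /andP [_ HCx].
    have : x \in C :&: A by rewrite inE HCx xA.
    by rewrite E inE.
  have key : forall A, A \in S0 -> A \in S1 -> x |: A \in shS F.
    move=> A HA0 HA1; have nxA := nx0 A HA0.
    move: HA0 HA1; rewrite !inE => /shbP G0 /shbP G1; apply/shbP => B HB.
    case: (boolP (x \in B)) => xB.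
    + have HB' : B :\ x \subset A.
        apply/subsetP => y; rewrite !inE => /andP [Hyx HyB].
        by have := subsetP HB y HyB; rewrite !inE (negbTE Hyx).
      have [C HC E] := G1 _ HB'; exists C; first exact: (subsetP sub1).
      move: HC; rewrite !inE => /andP [_ xC].
      apply/setP => y; rewrite !inE; case: (eqVneq y x) => [->|Hyx]; first by rewrite xC xB.
      by move/setP: E => /(_ y); rewrite !inE Hyx.
    + have HB' : B \subset A.
        apply/subsetP => y HyB; have := subsetP HB y HyB; rewrite !inE.
        case: (eqVneq y x) => [Hyx|//]; by move: HyB; rewrite Hyx (negbTE xB).
      have [C HC E] := G0 _ HB'; exists C; first exact: (subsetP sub0).
      move: HC; rewrite !inE => /andP [xC _].
      apply/setP => y; rewrite !inE; case: (eqVneq y x) => [->|Hyx]; first by rewrite (negbTE xC) (negbTE xB).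
      by move/setP: E => /(_ y); rewrite !inE.
  set Xs := S0 :|: S1.
  set Ys := [set x |: A | A in S0 :&: S1].
  have cY : #|Ys| = #|S0 :&: S1|.
    apply: card_in_imset => A B HA HB E.
    have nA : x \notin A by apply: nx0; move: HA; rewrite inE => /andP [].
    have nB : x \notin B by apply: nx0; move: HB; rewrite inE => /andP [].
    apply/setP => y; move/setP: E => /(_ y); rewrite !inE.
    case: (eqVneq y x) => [->|//]; by rewrite (negbTE nA) (negbTE nB).
  have dXY : Xs :&: Ys = set0.
    apply/setP => A; rewrite in_setI in_set0; apply/negP => /andP [HX /imsetP [A' _ EA]].
    have xA : x \in A by rewrite EA setU11.
    by move: HX; rewrite in_setU => /orP [H|H]; [have := nx0 _ H|have := nx1 _ H]; rewrite xA.
  have sXY : Xs :|: Ys \subset shS F.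
    apply/subsetP => A; rewrite inE => /orP [|/imsetP [A' HA' ->]].
    + rewrite inE => /orP [] HA; rewrite inE; apply: shb_mono (_ : shb _ A); 
        [exact: sub0| by move: HA; rewrite inE|exact: sub1|by move: HA; rewrite inE].
    + move: HA'; rewrite inE => /andP [K0 K1]; exact: key.
  have := subset_leq_card sXY; have := cardsUI Xs Ys; rewrite dXY cards0 addn0 => ->.
  rewrite cY; have := cardsUI S0 S1; rewrite -/Xs => ->.
  move=> H; rewrite -Hcard; apply: leq_trans H; rewrite addnC; exact: leq_add.
Qed.

Lemma pajor (F : {set {set T}}) : #|F| <= #|shS F|.
Proof. exact: (pajor_n #|F|). Qed.

End Pajor.

Lemma card_small N d : #|[set A : {set 'I_N} | #|A| < d]| <= N.+1 ^ d.
Proof.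
pose h (A : {set 'I_N}) : {ffun 'I_d -> option 'I_N} := [ffun j : 'I_d => nth None (map Some (enum A)) j].
have memh : forall A : {set 'I_N}, #|A| < d -> forall i, (i \in A) = [exists j, h A j == Some i].
  move=> A HA i; apply/idP/existsP.
  - move=> iA.
    have Hidx : index i (enum A) < d.
      have H : index i (enum A) < #|A| by rewrite cardE index_mem mem_enum.
      exact: ltn_trans H HA.
    exists (Ordinal Hidx); rewrite ffunE /= (nth_map i) ?index_mem ?mem_enum //.
    by rewrite nth_index ?mem_enum.
  - move=> [j]; rewrite ffunE; case: (ltnP j (size (enum A))) => Hj.
    + rewrite (nth_map i) // => /eqP [<-]; rewrite -mem_enum; exact: mem_nth.
    + by rewrite nth_default // size_map.
have inj : {in [set A : {set 'I_N} | #|A| < d] &, injective h}.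
  move=> A B; rewrite !inE => HA HB E; apply/setP => i; by rewrite (memh A HA) (memh B HB) E.
rewrite -(card_in_imset inj).
apply: leq_trans (max_card _) _; by rewrite card_ffun card_option !card_ord.
Qed.

Lemma big_N K : exists N, N.+1 ^ K < 2 ^ N.
Proof.
set s := 2 * K + 2.
have Hs : s < 2 ^ s by exact: ltn_expl.
have HK : K * (2 * s + 1) < 2 ^ s * 2 ^ s by rewrite /s in Hs *; nia.
set t := 2 * s.
have Ht : K * t.+1 < 2 ^ t.
  have -> : 2 ^ t = 2 ^ s * 2 ^ s by rewrite /t mul2n -addnn expnD.
  have E : t.+1 = 2 * s + 1 by rewrite addn1.
  rewrite E; exact: HK.
exists (2 ^ t).
have Hpos : 0 < 2 ^ t by rewrite expn_gt0.
have H1 : (2 ^ t).+1 ^ K <= 2 ^ (t.+1 * K).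
  rewrite expnM; clearbody t; case: K {Hs HK s Ht} => [|K] //.
  rewrite leq_exp2r // expnS; lia.
apply: leq_ltn_trans H1 _; rewrite ltn_exp2l // mulnC //.
Qed.

Lemma ultra_exists : exists U : (nat -> Prop) -> Prop,
  U (fun _ => True) /\ (forall A B, U A -> U B -> U (fun n => A n /\ B n)) /\
      (forall A B : nat -> Prop, (forall n, A n -> B n) -> U A -> U B) /\
      (forall A, U A \/ U (fun n => ~ A n)) /\ ~ U (fun _ => False) /\
      (forall N, U (fun n => (N <= n)%N)).
Proof.
have [G [GU sub]] := filter.ultraFilterLemma filter.eventually_filter.
exists G; have GF : filter.ProperFilter G by case: GU.
split; [|split; [|split; [|split; [|split]]]].
- have -> : (fun _ : nat => True) = classical_sets.setT by [].
  exact: filter.filterT.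
- move=> A B HA HB; exact: (filter.filterI HA HB).
- move=> A B HAB HA; exact: filter.filterS HAB HA.
- move=> A; exact: filter.in_ultra_setVsetC.
- move=> H; apply: (filter.filter_not_empty G); by [].
- move=> N; apply: sub; exists N => //.
Qed.

Section Ultra.
Variable U : (nat -> Prop) -> Prop.
Hypothesis UT : U (fun _ => True).
Hypothesis UI : forall A B, U A -> U B -> U (fun n => A n /\ B n).
Hypothesis US : forall A B : nat -> Prop, (forall n, A n -> B n) -> U A -> U B.
Hypothesis Uult : forall A, U A \/ U (fun n => ~ A n).
Hypothesis Unot : ~ U (fun _ => False).
Hypothesis Ucof : forall N, U (fun n => N <= n).

Lemma U_ext A B : (forall n, A n <-> B n) -> (U A <-> U B).
Proof. move=> H; split; apply: US => n; rewrite H //. Qed.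

Lemma U_congr Z A B : U Z -> (forall n, Z n -> (A n <-> B n)) -> (U A <-> U B).
Proof.
move=> HZ H; split => HA; have := UI _ _ HA HZ; apply: US => n [Ha Hz]; rewrite ?(H n Hz) // -(H n Hz) //.
Qed.

Lemma U_neg A : ~ U A <-> U (fun n => ~ A n).
Proof.
split; first by case: (Uult A).
move=> HnA HA; apply: Unot; have := UI _ _ HA HnA; apply: US => n []; tauto.
Qed.

Lemma U_const (P : Prop) : U (fun _ => P) <-> P.
Proof.
split => [H|HP]; last by apply: US UT.
apply: NNPP => HnP; apply: Unot; move: H; by apply: US.
Qed.

Lemma U_fin m (P : 'I_m -> nat -> Prop) : (forall i, U (P i)) -> U (fun n => forall i, P i n).
Proof.
move=> H.
suff : forall s : seq 'I_m, U (fun n => forall i, i \in s -> P i n).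
  move=> /(_ (enum 'I_m)); apply: US => n Hn i; apply: Hn; by rewrite mem_enum.
elim => [|j s IH]; first by apply: US UT.
have := UI _ _ (H j) IH; apply: US => n [Hj Hs] i; rewrite inE => /orP [/eqP ->//|]; exact: Hs.
Qed.

Variables (L : lang) (M : structure L).
Definition Eu (f g : nat -> M) := U (fun n => f n = g n).
Lemma Eu_eq : equivR Eu.
Proof.
split; [|split].
- move=> f; by apply: US UT.
- move=> f g; apply: US => n; done.
- move=> f g h H1 H2; have := UI _ _ H1 H2; apply: US => n [-> ->] //.
Qed.

Definition UP : structure L :=
  @Structure L (Q (nat -> M) Eu) (fun c => cls Eu (fun _ => iconst M c))
    (fun R args => U (fun n => ipred M R (fun i => rep Eu (args i) n))).

Lemma eval_UP (G : nat -> nat -> M) t :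
  eval UP (fun k => cls Eu (G k)) t = cls Eu (fun n => eval M (fun k => G k n) t).
Proof. by case: t. Qed.

Lemma los p (G : nat -> nat -> M) :
  sat UP (fun k => cls Eu (G k)) p <-> U (fun n => sat M (fun k => G k n) p).
Proof.
elim: p G => [t u|R ts|q IH|q IHq r IHr|x q IH] G.
- rewrite /= !eval_UP (cls_eq Eu_eq) //.
- change (ipred UP R (fun i => eval UP (fun k => cls Eu (G k)) (ts i)) <-> U (fun n => ipred M R (fun i => eval M (fun k => G k n) (ts i)))).
  have -> : (fun i => eval UP (fun k => cls Eu (G k)) (ts i)) =
            (fun i => cls Eu (fun n => eval M (fun k => G k n) (ts i))).
    by apply: functional_extensionality => i; rewrite eval_UP.
  change (U (fun n => ipred M R (fun i => rep Eu (cls Eu (fun n0 => eval M (fun k => G k n0) (ts i))) n)) <-> U (fun n => ipred M R (fun i => eval M (fun k => G k n) (ts i)))).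
  apply: (U_congr (fun n => forall i, rep Eu (cls Eu (fun n0 => eval M (fun k => G k n0) (ts i))) n =
                                        eval M (fun k => G k n) (ts i))).
  + apply: U_fin => i; exact: (rep_cls Eu_eq).
  + move=> n Hn; have -> // : (fun i => rep Eu (cls Eu (fun n0 => eval M (fun k => G k n0) (ts i))) n) =
                      (fun i => eval M (fun k => G k n) (ts i)).
    by apply: functional_extensionality => i; rewrite Hn.
- rewrite /= IH U_neg //.
- rewrite /= IHq IHr; split; [case; exact: UI|move=> H; split; move: H; apply: US => n []//].
- rewrite /=; split.
  + move=> [a Ha].
    have Eq : upd (fun k => cls Eu (G k)) x a = (fun k => cls Eu (upd G x (rep Eu a) k)).
      apply: functional_extensionality => k; rewrite /upd; case: eqP => _ //; by rewrite cls_rep.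
    move: Ha; rewrite Eq IH; apply: US => n Hn; exists (rep Eu a n).
    have <- // : (fun k => upd G x (rep Eu a) k n) = upd (fun k => G k n) x (rep Eu a n).
    apply: functional_extensionality => k; rewrite /upd; by case: eqP.
  + move=> H.
    pose h := fun n => match excluded_middle_informative (exists a, sat M (upd (fun k => G k n) x a) q) with
                       | left e => proj1_sig (constructive_indefinite_description _ e)
                       | right _ => G 0 n end.
    exists (cls Eu h).
    have Eq : upd (fun k => cls Eu (G k)) x (cls Eu h) = (fun k => cls Eu (upd G x h k)).
      apply: functional_extensionality => k; rewrite /upd; by case: eqP.
    rewrite Eq IH; move: H; apply: US => n Hn.
    have -> : (fun k => upd G x h k n) = upd (fun k => G k n) x (h n).
      apply: functional_extensionality => k; rewrite /upd; by case: eqP.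
    rewrite /h; case: excluded_middle_informative => // e.
    by case: (constructive_indefinite_description _ e).
Qed.

Lemma UP_model (T : theory L) : model_of M T -> model_of UP T.
Proof.
move=> HM p Hp w.
have -> : w = (fun k => cls Eu (rep Eu (w k))) by apply: functional_extensionality => k; rewrite cls_rep.
apply/los; apply: US UT => n _; exact: HM.
Qed.

End Ultra.

Definition shat {X} (f : nat -> X -> Prop) (S : seq nat) :=
  forall J : nat -> Prop, exists x, forall s, s \in S -> (f s x <-> J s).
Definition ALFS {X} (f : nat -> X -> Prop) :=
  forall n, exists S, uniq S /\ n <= size S /\ shat f S.

Section ToIP.
Variable U : (nat -> Prop) -> Prop.
Hypothesis UT : U (fun _ => True).
Hypothesis UI : forall A B, U A -> U B -> U (fun n => A n /\ B n).
Hypothesis US : forall A B : nat -> Prop, (forall n, A n -> B n) -> U A -> U B.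
Hypothesis Uult : forall A, U A \/ U (fun n => ~ A n).
Hypothesis Unot : ~ U (fun _ => False).
Hypothesis Ucof : forall N, U (fun n => N <= n).

Lemma alfs_ip L (M : structure L) (T : theory L) (HM : model_of M T) p xs X
   (A : nat -> nat -> M) (B : X -> nat -> M) :
  ALFS (fun s x => sat M (mix xs (A s) (B x)) p) -> has_IP T p xs.
Proof.
move=> H.
pose S n := proj1_sig (constructive_indefinite_description _ (H n)).
have HS : forall n, uniq (S n) /\ n <= size (S n) /\ shat (fun s x => sat M (mix xs (A s) (B x)) p) (S n).
  move=> n; rewrite /S; by case: (constructive_indefinite_description _ _).
pose J n (I : nat -> Prop) := fun k => exists i, i < n /\ I i /\ nth 0 (S n) i = k.
pose xw n I := proj1_sig (constructive_indefinite_description _ (proj2 (proj2 (HS n)) (J n I))).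
have Hxw : forall n I s, s \in S n -> (sat M (mix xs (A s) (B (xw n I))) p <-> J n I s).
  move=> n I; rewrite /xw; by case: (constructive_indefinite_description _ _).
exists (UP U L M); split; first exact: UP_model.
exists (fun i k => cls (Eu U L M) (fun n => A (nth 0 (S n) i) k)),
       (fun I k => cls (Eu U L M) (fun n => B (xw n I) k)) => i I.
have -> : mix xs (fun k => cls (Eu U L M) (fun n => A (nth 0 (S n) i) k))
                 (fun k => cls (Eu U L M) (fun n => B (xw n I) k)) =
          (fun k => cls (Eu U L M) (fun n => mix xs (A (nth 0 (S n) i)) (B (xw n I)) k)).
  by apply: functional_extensionality => k; rewrite /mix; case: ifP.
rewrite los //.
rewrite -(U_const U UT US Unot (I i)).
apply: (U_congr U UI US (fun n => i < n)); first exact: Ucof.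
move=> n Hin; have [Hu [Hsz _]] := HS n.
have Hi : i < size (S n) by exact: leq_trans Hin Hsz.
rewrite Hxw; last exact: mem_nth.
split; last by move=> HI; exists i.
move=> [i' [Hi' [HI Heq]]].
have Hi'' : i' < size (S n) by exact: leq_trans Hi' Hsz.
move/eqP: Heq; rewrite nth_uniq // => /eqP <- //.
Qed.

End ToIP.

Definition pb (P : Prop) : bool := if excluded_middle_informative P then true else false.
Lemma pbE P : pb P <-> P.
Proof. rewrite /pb; case: excluded_middle_informative => //. Qed.

Section Count.
Variable X : Type.

Lemma count_core (f g : nat -> X -> Prop) d (S : seq nat) :
  uniq S -> shat (fun s x => f s x /\ g s x) S ->
  (forall S', uniq S' -> d <= size S' -> ~ shat f S') ->
  (forall S', uniq S' -> d <= size S' -> ~ shat g S') ->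
  2 ^ size S <= (size S).+1 ^ d * (size S).+1 ^ d.
Proof.
move=> Su Sh Nf Ng.
set N := size S.
pose s (i : 'I_N) := nth 0 S i.
have sinj : injective s.
  move=> i j /eqP; rewrite /s nth_uniq // => /eqP; exact: val_inj.
have smem : forall i, s i \in S by move=> i; exact: mem_nth.
pose J (B : {set 'I_N}) := fun k => exists i, i \in B /\ s i = k.
have HxB : forall B : {set 'I_N}, exists x, forall i : 'I_N, (f (s i) x /\ g (s i) x) <-> i \in B.
  move=> B; have [x Hx] := Sh (J B); exists x => i; rewrite Hx //; split.
  - by move=> [j [jB /sinj <-]].
  - move=> iB; by exists i.
pose xB B := proj1_sig (constructive_indefinite_description _ (HxB B)).
have HxB' : forall (B : {set 'I_N}) (i : 'I_N), (f (s i) (xB B) /\ g (s i) (xB B)) <-> i \in B.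
  move=> B; rewrite /xB; by case: (constructive_indefinite_description _ _).
pose tr (f' : nat -> X -> Prop) x := [set i : 'I_N | pb (f' (s i) x)].
have bound : forall f' : nat -> X -> Prop,
    (forall S', uniq S' -> d <= size S' -> ~ shat f' S') ->
    #|[set tr f' (xB B) | B : {set 'I_N}]| <= N.+1 ^ d.
  move=> f' Nf'.
  set F := [set tr f' (xB B) | B : {set 'I_N}].
  apply: leq_trans (pajor _ F) _; apply: leq_trans (card_small N d).
  apply: subset_leq_card; apply/subsetP => A; rewrite !inE => HA.
  rewrite ltnNge; apply/negP => HdA.
  apply: (Nf' [seq s i | i <- enum A]).
  - rewrite map_inj_uniq //; exact: enum_uniq.
  - by rewrite size_map -cardE.
  - move=> J'; pose B := [set i in A | pb (J' (s i))].
    have HB : B \subset A by apply/subsetP => i; rewrite inE => /andP [].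
    have [C HC E] := (shbP _ _ _ HA) B HB.
    move: HC => /imsetP [B0 _ EC].
    exists (xB B0) => k /mapP [i]; rewrite mem_enum => iA ->.
    have : (i \in C :&: A) = (i \in B) by rewrite E.
    rewrite !inE iA andbT EC inE /= => Eb; split.
    + move/pbE; rewrite Eb => /pbE //.
    + move/pbE; rewrite -Eb => /pbE //.
have Hinter : forall B : {set 'I_N}, B = tr f (xB B) :&: tr g (xB B).
  move=> B; apply/setP => i; rewrite !inE; apply/idP/andP.
  - move/HxB' => [H1 H2]; split; exact/pbE.
  - move=> [/pbE H1 /pbE H2]; apply/HxB'; by split.
pose h B := (tr f (xB B), tr g (xB B)).
have hinj : injective h.
  move=> B C [E1 E2]; rewrite (Hinter B) (Hinter C) E1 E2 //.
have c2 : #|[set: {set 'I_N}]| = 2 ^ N by rewrite -powersetT card_powerset cardsT card_ord.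
rewrite -c2 -(card_imset _ hinj).
apply: leq_trans (_ : #|setX [set tr f (xB B) | B : {set 'I_N}] [set tr g (xB B) | B : {set 'I_N}]| <= _).
- apply: subset_leq_card; apply/subsetP => p /imsetP [B _ ->]; rewrite inE /=.
  apply/andP; split; apply/imsetP; by exists B.
- rewrite cardsX; apply: leq_mul; exact: bound.
Qed.

Lemma noALFS (f : nat -> X -> Prop) : ~ ALFS f ->
  exists d, forall S, uniq S -> d <= size S -> ~ shat f S.
Proof.
move=> H; apply: NNPP => H'; apply: H => n; apply: NNPP => Hn; apply: H'; exists n => S Su Sz Sh.
apply: Hn; by exists S.
Qed.

Lemma shat_take (f : nat -> X -> Prop) S n : shat f S -> shat f (take n S).
Proof. move=> H J; have [x Hx] := H J; exists x => s Hs; apply: Hx; exact: mem_take Hs. Qed.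

Lemma ALFS_and (f g : nat -> X -> Prop) :
  ALFS (fun s x => f s x /\ g s x) -> ALFS f \/ ALFS g.
Proof.
move=> H; apply: NNPP => Hn.
have Hf : ~ ALFS f by tauto.
have Hg : ~ ALFS g by tauto.
have [d1 H1] := noALFS f Hf; have [d2 H2] := noALFS g Hg.
set d := maxn d1 d2.
have [N HN] := big_N (d + d).
have [S [Su [Sz Sh]]] := H N.
have Hsz : size (take N S) = N by rewrite size_take; case: ltnP => // H3; apply/eqP; rewrite eqn_leq Sz H3.
have := count_core f g d (take N S) (take_uniq _ Su) (shat_take _ _ _ Sh).
rewrite Hsz -expnD => C.
have : 2 ^ N <= N.+1 ^ (d + d).
  apply: C => S' Su' Sz'.
  - apply: H1 => //; exact: leq_trans (leq_maxl _ _) Sz'.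
  - apply: H2 => //; exact: leq_trans (leq_maxr _ _) Sz'.
by rewrite leqNgt HN.
Qed.

Lemma ALFS_iff (f g : nat -> X -> Prop) : (forall s x, f s x <-> g s x) -> ALFS f -> ALFS g.
Proof.
move=> E H n; have [S [Su [Sz Sh]]] := H n; exists S; split => //; split => // J.
have [x Hx] := Sh J; exists x => s Hs; rewrite -E; exact: Hx.
Qed.

Lemma ALFS_neg (f : nat -> X -> Prop) : ALFS (fun s x => ~ f s x) -> ALFS f.
Proof.
move=> H n; have [S [Su [Sz Sh]]] := H n; exists S; split => //; split => // J.
have [x Hx] := Sh (fun s => ~ J s); exists x => s Hs; have := Hx s Hs; tauto.
Qed.

Lemma ALFS_or (f g : nat -> X -> Prop) :
  ALFS (fun s x => f s x \/ g s x) -> ALFS f \/ ALFS g.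
Proof.
move=> H.
have H' : ALFS (fun s x => ~ (~ f s x /\ ~ g s x)).
  apply: ALFS_iff H => s x; tauto.
have := ALFS_and _ _ (ALFS_neg _ H'); case => [/ALFS_neg|/ALFS_neg]; tauto.
Qed.

Lemma ALFS_false : ~ ALFS (fun (_ : nat) (_ : X) => False).
Proof.
move=> H; have [[|s S] [_ [Sz Sh]]] := H 1 => //.
have [x Hx] := Sh (fun _ => True); have := Hx s; rewrite inE eqxx => /(_ isT); tauto.
Qed.

End Count.

Lemma dsat_ALFS (L1 L2 : lang) (A1 : structure L1) (A2 : structure L2) X
  (u1 : nat -> X -> nat -> A1) (u2 : nat -> X -> nat -> A2) l :
  ALFS (fun s x => dsat L1 L2 A1 A2 (u1 s x) (u2 s x) l) ->
  (exists a, ALFS (fun s x => sat A1 (u1 s x) a)) \/ (exists b, ALFS (fun s x => sat A2 (u2 s x) b)).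
Proof.
elim: l => [|pq l IH] /= H.
- exfalso; exact: ALFS_false H.
- case: (ALFS_or _ _ _ H) => [/ALFS_and [Ha|Hb]|/IH //].
  + left; by exists pq.1.
  + right; by exists pq.2.
Qed.

Theorem theorem3p2 (L1 L2 : lang) (d1 : const L1) (d2 : const L2)
  (T1 : theory L1) (T2 : theory L2) :
  (forall s, T1 s -> sentence s) -> (forall s, T2 s -> sentence s) ->
  consistent T1 -> consistent T2 ->
  (NIP (Tsim d1 d2 T1 T2) <-> NIP T1 /\ NIP T2).
Proof.
move=> _ _ C1 C2; split.
- move=> H; split => p xs Hip.
  + apply: (H (conv1 L1 L2 d2 p) xs); exact: dir1_T1.
  + apply: (H (conv2 L1 L2 d1 p) xs); exact: dir1_T2.
- move=> [NIP1 NIP2] p xs [M [HM [a [b Hab]]]].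
  have [p' [b' [Hc Hp']]] := ip_elim _ M p xs a b Hab.
  have H0 : ALFS (fun s (I : nat -> Prop) => sat M (mix xs (a s) (b' I)) p').
    move=> n; exists (iota 0 n); split; first exact: iota_uniq.
    split; first by rewrite size_iota.
    move=> J; exists J => s _; exact: Hp'.
  have H1 := ALFS_iff _ _ _ (fun s I => fv_sat L1 L2 d1 d2 T1 T2 M HM p' (mix xs (a s) (b' I)) Hc) H0.
  have [U [UT [UI [US [Uult [Unot Ucof]]]]]] := ultra_exists.
  case: (dsat_ALFS _ _ _ _ _ _ _ _ H1) => [[al Hal]|[be Hbe]].
  + apply: (NIP1 al xs).
    apply: (alfs_ip U UT UI US Uult Unot Ucof _ _ _ (N1_model L1 L2 d1 d2 T1 T2 M HM) al xs _
             (fun s k => q1 L1 L2 d2 M (a s k)) (fun I k => q1 L1 L2 d2 M (b' I k))).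
    apply: ALFS_iff Hal => s I.
    have -> // : (fun k => q1 L1 L2 d2 M (mix xs (a s) (b' I) k)) =
       mix xs (fun k => q1 L1 L2 d2 M (a s k)) (fun k => q1 L1 L2 d2 M (b' I k)).
    by apply: functional_extensionality => k; rewrite /mix; case: ifP.
  + apply: (NIP2 be xs).
    apply: (alfs_ip U UT UI US Uult Unot Ucof _ _ _ (N2_model L1 L2 d1 d2 T1 T2 M HM) be xs _
             (fun s k => q2 L1 L2 d1 M (a s k)) (fun I k => q2 L1 L2 d1 M (b' I k))).
    apply: ALFS_iff Hbe => s I.
    have -> // : (fun k => q2 L1 L2 d1 M (mix xs (a s) (b' I) k)) =
       mix xs (fun k => q2 L1 L2 d1 M (a s k)) (fun k => q2 L1 L2 d1 M (b' I k)).
    by apply: functional_extensionality => k; rewrite /mix; case: ifP.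
Qed.
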